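(* Let $(\mathscr C,A,\psi)$ be an entwining structure. Then the functors $S_\psi: {_A^{\mathscr C}}Ctr(\psi)\longrightarrow {^{\mathscr C}}Ctr$ and $T_\psi: {^{\mathscr C}}Ctr\longrightarrow {_A^{\mathscr C}}Ctr(\psi)$ form a Frobenius pair (i.e. $T_\psi$ is also left adjoint to $S_\psi$) if and only if there exist $\sigma\in V_1$ and $\lambda\in W_1$ such that \begin{gather*} \epsilon_X(f)\cdot 1= \sigma_X(f_{X1}\otimes \lambda^{X1}(f_{X2}))\lambda^{X2}(f_{X2}),\\ \epsilon_X(f)\cdot 1= \sigma_X(f_{X1}^\psi\otimes \lambda^{X2}(f_{X2}))\lambda^{X1}(f_{X2})_\psi \end{gather*} for every $f\in \mathscr C(X,X)$, $X\in Ob(\mathscr C)$.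
   Context: $K$ is a field, $(U',U):=Hom_K(U',U)$. $\mathscr C$ is a coalgebra with several objects ($\delta_{XYZ}:\mathscr C(X,Z)\to\mathscr C(Y,Z)\otimes\mathscr C(X,Y)$, $f\mapsto f_{Y1}\otimes f_{Y2}$, counits $\epsilon_X$). $(\mathscr C,A,\psi)$ is an entwining structure: $A$ a $K$-algebra, $\psi_{XY}:\mathscr C(X,Y)\otimes A\to A\otimes\mathscr C(X,Y)$, $f\otimes a\mapsto a_\psi\otimes f^\psi$, with $a_\psi\otimes\delta_{XYZ}(f^\psi)=a_{\psi\psi}\otimes f_{Y1}^\psi\otimes f_{Y2}^\psi$, $(ab)_\psi\otimes f^\psi=a_\psi b_\psi\otimes f^{\psi\psi}$, $\psi(f\otimes1)=1\otimes f$, $a_\psi\epsilon_Z(g^\psi)=\epsilon_Z(g)a$. ${^\mathscr C}Ctr$ is the category of left $\mathscr C$-contramodules (vector spaces $\mathcal M(X)$ with $\pi_{XY}:(\mathscr C(X,Y),\mathcal M(Y))\to\mathcal M(X)$, coassociative and counital); ${_A^{\mathscr C}}Ctr(\psi)$ is the category of entwined contramodules (contramodules with left $A$-module structures $\mu_X:\mathcal M(X)\to(A,\mathcal M(X))$ satisfying $\mu_X\circ\pi_{XY}=(A,\pi_{XY})\circ(\psi_{XY},\mathcal M(Y))\circ(\mathscr C(X,Y),\mu_Y)$). $S_\psi$ is the forgetful functor and $T_\psi(\mathcal M)(X)=(A,\mathcal M(X))$ (contramodule structure $(A,\pi_{XY})\circ(\psi_{XY},\mathcal M(Y))$, $A$-action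 from multiplication), so $(S_\psi,T_\psi)$ is adjoint. $V_1$: collections $\sigma=\{\sigma_X:\mathscr C(X,X)\otimes A\to K\}$ with $\sigma_Y(f_{Y1}\otimes a_\psi)f_{Y2}^\psi=\sigma_X(f_{X2}\otimes a)f_{X1}$ for $f\in\mathscr C(X,Y)$, $a\in A$. $W_1$: collections $\lambda=\{\lambda^X:\mathscr C(X,X)\to A\otimes A\}$, $\lambda^X(f)=\lambda^{X1}(f)\otimes\lambda^{X2}(f)$, with $\lambda^{Y1}(f_{Y1})\otimes\lambda^{Y2}(f_{Y1})\otimes f_{Y2}=\lambda^{X1}(f_{X2})_\psi\otimes\lambda^{X2}(f_{X2})_\psi\otimes f_{X1}^{\psi\psi}$ for $f\in\mathscr C(X,Y)$ and $\lambda^{Z1}(g)\otimes\lambda^{Z2}(g)a=a_\psi\lambda^{Z1}(g^\psi)\otimes\lambda^{Z2}(g^\psi)$ for $g\in\mathscr C(Z,Z)$, $a\in A$. *)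

(* Defs.v *)
From HB Require Import structures.
From mathcomp Require Import all_boot all_algebra.
From mathcomp Require Import boolp classical_sets functions.
Import GRing.Theory.
Local Open Scope ring_scope.
Set Implicit Arguments. Unset Strict Implicit. Unset Printing Implicit Defensive.

Section Hom.
Variables (K : fieldType) (U V : lmodType K).
Definition linearP (f : U -> V) : Prop :=
  forall (a : K) (u v : U), f (a *: u + v) = a *: f u + f v.
Definition islin : {pred (U -> V)} := fun f => `[< linearP f >].
Fact islin_submod : submod_closed islin.
Proof.
split.
  by apply/asboolP => a u v /=; rewrite scaler0 addr0.
move=> a f g /asboolP Hf /asboolP Hg; apply/asboolP => b u v /=.
have E : forall x, (a *: f + g) x = a *: f x + g x by [].
rewrite !E Hf Hg !scalerDr !scalerA mulrC.
rewrite -!addrA; congr (_ + _); rewrite addrCA; congr (_ + _); by rewrite addrC.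
Qed.
HB.instance Definition _ := GRing.isSubmodClosed.Build K (U -> V) islin islin_submod.
Record hom := Hom { hom_fun :> U -> V; hom_lin : hom_fun \in islin }.
HB.instance Definition _ := [isSub for hom_fun].
HB.instance Definition _ := [Choice of hom by <:].
HB.instance Definition _ := [SubChoice_isSubZmodule of hom by <:].
HB.instance Definition _ := [SubZmodule_isSubLmodule of hom by <:].
Definition mkhom (f : U -> V) : hom :=
  match pselect (linearP f) with
  | left p => @Hom f (asboolT p)
  | right _ => 0
  end.
End Hom.

(* Tensors, represented by formal finite sums  sum_i u_i (x) v_i ,    *)
(* and multilinear maps.  A linear map out of U (x) V is the same as  *)
(* a bilinear map on U x V (universal property); [tapp b t] applies   *)
(* the linear map induced by the bilinear b to the tensor t.          *)

Definition tapp (U V : Type) (W : nmodType) (b : U -> V -> W)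
  (t : seq (U * V)) : W := \sum_(p <- t) b p.1 p.2.

Section Multilinear.
Variable K : fieldType.
Definition bilin (U V W : lmodType K) (b : U -> V -> W) : Prop :=
  (forall v, linearP (fun u => b u v)) /\ (forall u, linearP (b u)).
Definition trilin (U V X W : lmodType K) (g : U -> V -> X -> W) : Prop :=
  [/\ (forall v x, linearP (fun u => g u v x)),
      (forall u x, linearP (fun v => g u v x)) &
      (forall u v, linearP (g u v))].
End Multilinear.

(*   delta X Y Z : C(X,Z) -> C(Y,Z) (x) C(X,Y),   f |-> f_1 (x) f_2     *)

Unset Implicit Arguments.
Record coalg (K : fieldType) := Coalg {
  Ob : Type;
  Cm : Ob -> Ob -> lmodType K;
  delta : forall X Y Z : Ob, Cm X Z -> seq (Cm Y Z * Cm X Y);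
  eps : forall X : Ob, Cm X X -> K }.
Arguments Ob {K} c.
Arguments Cm {K c} X Y.
Arguments delta {K c} X Y Z _.
Arguments eps {K c} X _.

Section Coalg.
Variables (K : fieldType) (C : coalg K).
Local Notation Ob := (Ob C).

Definition is_coalg : Prop :=
  [/\ (* delta is a linear map into the tensor product *)
      (forall (X Y Z : Ob) (W : lmodType K) (b : Cm Y Z -> Cm X Y -> W),
         bilin b -> linearP (fun h => tapp b (delta X Y Z h))),
      (forall X : Ob, linearP (eps X : Cm X X -> K^o)),
      (* coassociativity: (delta_YZV (x) id) delta_XYV = (id (x) delta_XYZ) delta_XZV *)
      (forall (X Y Z V : Ob) (f : Cm X V) (W : lmodType K)
              (g : Cm Z V -> Cm Y Z -> Cm X Y -> W), trilin g ->
         tapp (fun g1 g2 => tapp (fun h1 h2 => g h1 h2 g2) (delta Y Z V g1))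
              (delta X Y V f)
         = tapp (fun g1 g2 => tapp (fun h1 h2 => g g1 h1 h2) (delta X Y Z g2))
              (delta X Z V f)) &
      (forall (X Y : Ob) (f : Cm X Y),
         tapp (fun g1 g2 => eps Y g1 *: g2) (delta X Y Y f) = f /\
         tapp (fun g1 g2 => eps X g2 *: g1) (delta X X Y f) = f)].

(*   psi X Y f a = psi_XY (f (x) a) = a_psi (x) f^psi  in A (x) C(X,Y)  *)

Variable A : algType K.
Variable psi : forall X Y : Ob, Cm X Y -> A -> seq (A * Cm X Y).

Definition is_entwining : Prop :=
  [/\ (* psi_XY is a linear map C(X,Y) (x) A -> A (x) C(X,Y) *)
      (forall (X Y : Ob) (W : lmodType K) (b : A -> Cm X Y -> W),
         bilin b -> bilin (fun f a => tapp b (psi X Y f a))),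
      (* a_psi (x) delta_XYZ(f^psi) = a_psipsi (x) f_Y1^psi (x) f_Y2^psi *)
      (forall (X Y Z : Ob) (f : Cm X Z) (a : A) (W : lmodType K)
              (g : A -> Cm Y Z -> Cm X Y -> W), trilin g ->
         tapp (fun a' f' => tapp (g a') (delta X Y Z f')) (psi X Z f a)
         = tapp (fun g1 g2 =>
                   tapp (fun a' g2' =>
                           tapp (fun a'' g1' => g a'' g1' g2') (psi Y Z g1 a'))
                        (psi X Y g2 a))
                (delta X Y Z f)),
      (* (ab)_psi (x) f^psi = a_psi b_psi (x) f^psipsi  (f passes a first) *)
      (forall (X Y : Ob) (f : Cm X Y) (a b : A) (W : lmodType K)
              (be : A -> Cm X Y -> W), bilin be ->
         tapp be (psi X Y f (a * b))
         = tapp (fun a' f' => tapp (fun b' f'' => be (a' * b') f'') (psi X Y f' b))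
                (psi X Y f a)),
      (forall (X Y : Ob) (f : Cm X Y) (W : lmodType K)
              (be : A -> Cm X Y -> W), bilin be ->
         tapp be (psi X Y f 1) = be 1 f) &
      (forall (Z : Ob) (g : Cm Z Z) (a : A),
         tapp (fun a' g' => eps Z g' *: a') (psi Z Z g a) = eps Z g *: a)].

(* Hom_K(U,V) is [hom U V]; [mkhom f] packages a linear function f as *)
(* an element of [hom U V] (it is only applied to linear functions).  *)

Record ctr := Ctr {
  cM : Ob -> lmodType K;
  cpi : forall X Y : Ob, hom (hom (Cm X Y) (cM Y)) (cM X) }.

Definition is_ctr (M : ctr) : Prop :=
  (* coassociativity: pi_XY o (C(X,Y), pi_YZ) = pi_XZ o (delta_XYZ, M(Z)),
     tested on all phi in Hom(C(Y,Z) (x) C(X,Y), M(Z)) = bilinear maps *)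
  (forall (X Y Z : Ob) (phi : Cm Y Z -> Cm X Y -> cM M Z), bilin phi ->
     cpi M X Y (mkhom (fun f => cpi M Y Z (mkhom (fun g => phi g f))))
     = cpi M X Z (mkhom (fun h => tapp phi (delta X Y Z h)))) /\
  (forall (X : Ob) (m : cM M X), cpi M X X (mkhom (fun f => eps X f *: m)) = m).

Record ent := Ent {
  ectr : ctr;
  eact : forall X : Ob, A -> cM ectr X -> cM ectr X }.

Definition is_ent (N : ent) : Prop :=
  [/\ is_ctr (ectr N),
      (* mu_X : M(X) -> Hom(A, M(X)) linear, with linear values *)
      (forall X : Ob, bilin (eact N X)),
      (forall (X : Ob) (a b : A) (m : cM (ectr N) X),
         eact N X (a * b) m = eact N X a (eact N X b m)),
      (forall (X : Ob) (m : cM (ectr N) X), eact N X 1 m = m) &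
      (* mu_X o pi_XY = (A, pi_XY) o (psi_XY, M(Y)) o (C(X,Y), mu_Y) *)
      (forall (X Y : Ob) (phi : hom (Cm X Y) (cM (ectr N) Y)) (a : A),
         eact N X a (cpi (ectr N) X Y phi)
         = cpi (ectr N) X Y
             (mkhom (fun c => tapp (fun a' c' => eact N Y a' (phi c')) (psi X Y c a))))].

Definition is_ctr_mor (M N : ctr) (h : forall X : Ob, hom (cM M X) (cM N X)) : Prop :=
  forall (X Y : Ob) (phi : hom (Cm X Y) (cM M Y)),
    h X (cpi M X Y phi) = cpi N X Y (mkhom (fun c => h Y (phi c))).

Definition is_ent_mor (M N : ent)
  (h : forall X : Ob, hom (cM (ectr M) X) (cM (ectr N) X)) : Prop :=
  is_ctr_mor (ectr M) (ectr N) h /\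
  forall (X : Ob) (a : A) (m : cM (ectr M) X), h X (eact M X a m) = eact N X a (h X m).

Definition S_obj (N : ent) : ctr := ectr N.

Definition T_obj (M : ctr) : ent :=
  @Ent (@Ctr (fun X => hom A (cM M X))
          (fun X Y => mkhom (fun phi : hom (Cm X Y) (hom A (cM M Y)) =>
             mkhom (fun a => cpi M X Y
               (mkhom (fun c => tapp (fun a' c' => phi c' a') (psi X Y c a)))))))
       (fun X b g => mkhom (fun a => g (a * b))).

Definition T_mor (M N : ctr) (h : forall X : Ob, hom (cM M X) (cM N X)) :
  forall X : Ob, hom (hom A (cM M X)) (hom A (cM N X)) :=
  fun X => mkhom (fun g : hom A (cM M X) => mkhom (fun a => h X (g a))).

Definition T_left_adjoint_S : Prop :=
  exists (eta : forall (M : ctr) (X : Ob), hom (cM M X) (hom A (cM M X)))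
         (epsT : forall (N : ent) (X : Ob),
                   hom (hom A (cM (ectr N) X)) (cM (ectr N) X)),
  [/\ (forall M : ctr, is_ctr M -> is_ctr_mor M (S_obj (T_obj M)) (eta M)),
      (forall N : ent, is_ent N -> is_ent_mor (T_obj (S_obj N)) N (epsT N)),
      (forall (M M' : ctr) (h : forall X : Ob, hom (cM M X) (cM M' X)),
         is_ctr M -> is_ctr M' -> is_ctr_mor M M' h ->
         forall (X : Ob) (m : cM M X), T_mor M M' h X (eta M X m) = eta M' X (h X m)) &
      (forall (N N' : ent) (k : forall X : Ob, hom (cM (ectr N) X) (cM (ectr N') X)),
         is_ent N -> is_ent N' -> is_ent_mor N N' k ->
         forall (X : Ob) (g : hom A (cM (ectr N) X)),
           epsT N' X (T_mor (ectr N) (ectr N') k X g) = k X (epsT N X g))]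
  /\
  [/\ (forall M : ctr, is_ctr M ->
         forall (X : Ob) (g : hom A (cM M X)),
           epsT (T_obj M) X (T_mor M (S_obj (T_obj M)) (eta M) X g) = g) &
      (forall N : ent, is_ent N ->
         forall (X : Ob) (m : cM (ectr N) X), epsT N X (eta (ectr N) X m) = m)].

Definition in_V1 (sigma : forall X : Ob, Cm X X -> A -> K) : Prop :=
  (forall X : Ob, bilin (sigma X : Cm X X -> A -> K^o)) /\
  (forall (X Y : Ob) (f : Cm X Y) (a : A),
     tapp (fun g1 g2 =>
             tapp (fun a' g2' => sigma Y g1 a' *: g2') (psi X Y g2 a))
          (delta X Y Y f)
     = tapp (fun g1 g2 => sigma X g2 a *: g1) (delta X X Y f)).

Definition in_W1 (lam : forall X : Ob, Cm X X -> seq (A * A)) : Prop :=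
  [/\ (forall (X : Ob) (W : lmodType K) (b : A -> A -> W),
         bilin b -> linearP (fun g => tapp b (lam X g))),
      (forall (X Y : Ob) (f : Cm X Y) (W : lmodType K)
              (g : A -> A -> Cm X Y -> W), trilin g ->
         tapp (fun g1 g2 => tapp (fun l1 l2 => g l1 l2 g2) (lam Y g1))
              (delta X Y Y f)
         = tapp (fun g1 g2 =>
                   tapp (fun l1 l2 =>
                           tapp (fun l1' g1' =>
                                   tapp (fun l2' g1'' => g l1' l2' g1'')
                                        (psi X Y g1' l2))
                                (psi X Y g1 l1))
                        (lam X g2))
                (delta X X Y f)) &
      (forall (Z : Ob) (g : Cm Z Z) (a : A) (W : lmodType K)
              (b : A -> A -> W), bilin b ->
         tapp (fun l1 l2 => b l1 (l2 * a)) (lam Z g)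
         = tapp (fun a' g' => tapp (fun l1 l2 => b (a' * l1) l2) (lam Z g'))
                (psi Z Z g a))].

End Coalg.
Arguments is_coalg {K} C.
Arguments is_entwining {K C A} psi.
Arguments ctr {K} C.
Arguments T_left_adjoint_S {K C A} psi.
Arguments in_V1 {K C A} psi sigma.
Arguments in_W1 {K C A} psi lam.

(* Main.v *)
Require Import Defs.
From HB Require Import structures.
From mathcomp Require Import all_boot all_algebra.
From mathcomp Require Import boolp classical_sets functions.
Import GRing.Theory.
Local Open Scope ring_scope.
Set Implicit Arguments. Unset Strict Implicit. Unset Printing Implicit Defensive.

Notation Hm := Defs.hom.
Notation linearP := Defs.linearP.

Section Gen.
Variable K : fieldType.
Implicit Types U V W : lmodType K.

Lemma linD U V (f : U -> V) : linearP f -> forall x y, f (x + y) = f x + f y.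
Proof. by move=> H x y; have := H 1 x y; rewrite !scale1r. Qed.
Lemma lin0 U V (f : U -> V) : linearP f -> f 0 = 0.
Proof.
move=> H; have := H 1 0 0; rewrite !scale1r addr0 => E.
apply: (addrI (f 0)); rewrite addr0; exact: esym E.
Qed.
Lemma linZ U V (f : U -> V) : linearP f -> forall k x, f (k *: x) = k *: f x.
Proof. by move=> H k x; rewrite -[k *: x]addr0 H lin0 // addr0. Qed.
Lemma linN U V (f : U -> V) : linearP f -> forall x, f (- x) = - f x.
Proof. by move=> H x; rewrite -scaleN1r linZ // scaleN1r. Qed.
Lemma linS U V (f : U -> V) (I : Type) (s : seq I) (F : I -> U) :
  linearP f -> f (\sum_(i <- s) F i) = \sum_(i <- s) f (F i).
Proof.
move=> H; elim: s => [|i s IH]; first by rewrite !big_nil lin0.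
by rewrite !big_cons linD // IH.
Qed.

Lemma tapp_nil (T1 T2 : Type) (W : nmodType) (b : T1 -> T2 -> W) : tapp b [::] = 0.
Proof. by rewrite /tapp big_nil. Qed.
Lemma tapp_cons (T1 T2 : Type) (W : nmodType) (b : T1 -> T2 -> W) p s :
  tapp b (p :: s) = b p.1 p.2 + tapp b s.
Proof. by rewrite /tapp big_cons. Qed.
Lemma tapp_cat (T1 T2 : Type) (W : nmodType) (b : T1 -> T2 -> W) s t :
  tapp b (s ++ t) = tapp b s + tapp b t.
Proof. by rewrite /tapp big_cat. Qed.

Lemma tapp_lin (T1 T2 : Type) W W' (L : W -> W') (b : T1 -> T2 -> W) s :
  linearP L -> L (tapp b s) = tapp (fun x y => L (b x y)) s.
Proof. by move=> H; rewrite /tapp linS. Qed.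
Lemma tapp_ext (T1 T2 : Type) (W : nmodType) (b1 b2 : T1 -> T2 -> W) s :
  (forall x y, b1 x y = b2 x y) -> tapp b1 s = tapp b2 s.
Proof. by move=> H; apply: eq_bigr => p _; rewrite H. Qed.
Lemma tappD (T1 T2 : Type) (W : nmodType) (b1 b2 : T1 -> T2 -> W) s :
  tapp (fun x y => b1 x y + b2 x y) s = tapp b1 s + tapp b2 s.
Proof. by rewrite /tapp big_split. Qed.
Lemma tappZ (T1 T2 : Type) W (k : K) (b : T1 -> T2 -> W) s :
  tapp (fun x y => k *: b x y) s = k *: tapp b s.
Proof. by rewrite /tapp scaler_sumr. Qed.
Lemma tapp0 (T1 T2 : Type) (W : nmodType) s :
  tapp (fun (x : T1) (y : T2) => (0 : W)) s = 0.
Proof. by rewrite /tapp big1. Qed.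
Lemma tapp_linP (T1 T2 : Type) U W (b : U -> T1 -> T2 -> W) s :
  (forall x y, linearP (fun u => b u x y)) -> linearP (fun u => tapp (b u) s).
Proof.
move=> H k u v; rewrite -tappZ -tappD; apply: tapp_ext => x y; exact: H.
Qed.

Lemma hom_linP U V (h : Hm U V) : linearP h.
Proof. by case: h => f /= /asboolP. Qed.
Lemma homD U V (h : Hm U V) x y : h (x + y) = h x + h y.
Proof. exact/linD/hom_linP. Qed.
Lemma homZ U V (h : Hm U V) k x : h (k *: x) = k *: h x.
Proof. exact/linZ/hom_linP. Qed.
Lemma hom0 U V (h : Hm U V) : h 0 = 0.
Proof. exact/lin0/hom_linP. Qed.
Lemma hom_ext U V (h1 h2 : Hm U V) : (forall x, h1 x = h2 x) -> h1 = h2.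
Proof. by move=> H; apply: val_inj; apply: funext. Qed.
Lemma mkhomK U V (f : U -> V) : linearP f -> forall x, mkhom f x = f x.
Proof. by move=> H x; rewrite /mkhom; case: pselect. Qed.
Lemma mkhom_ext U V (f g : U -> V) : (forall x, f x = g x) -> mkhom f = mkhom g.
Proof. by move=> H; congr mkhom; apply: funext. Qed.
Lemma app_linP U V (x : U) : linearP (fun h : Hm U V => h x).
Proof. by []. Qed.
Lemma tapp_app (T1 T2 : Type) U V (b : T1 -> T2 -> Hm U V) s x :
  (tapp b s) x = tapp (fun u v => b u v x) s.
Proof. exact: (tapp_lin (L := fun h : Hm U V => h x)). Qed.
Lemma addhE U V (f g : Hm U V) x : (f + g) x = f x + g x.
Proof. by []. Qed.
Lemma scalehE U V k (f : Hm U V) x : (k *: f) x = k *: f x.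
Proof. by []. Qed.
Lemma zerohE U V x : (0 : Hm U V) x = 0.
Proof. by []. Qed.
Lemma opphE U V (f : Hm U V) x : (- f) x = - f x.
Proof. by []. Qed.
Lemma mkhom_linP U V W (F : U -> V -> W) :
  (forall u, linearP (F u)) -> (forall v, linearP (fun u => F u v)) ->
  linearP (fun u => mkhom (F u)).
Proof.
move=> H1 H2 k u v; apply: hom_ext => x.
apply: (@etrans _ _ (k *: mkhom (F u) x + mkhom (F v) x)); last by [].
by rewrite !mkhomK // H2.
Qed.
Lemma homfun_linP U V : linearP (fun h : Hm U V => (h : U -> V)).
Proof. by []. Qed.

End Gen.


Section Tensor.
Variables (K : fieldType) (U V : lmodType K).

Definition teq (s t : seq (U * V)) : Prop :=
  forall (W : lmodType K) (b : U -> V -> W), bilin b -> tapp b s = tapp b t.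

Lemma teq_refl s : teq s s. Proof. by []. Qed.
Lemma teq_sym s t : teq s t -> teq t s. Proof. by move=> H W b Hb; rewrite H. Qed.
Lemma teq_trans s t r : teq s t -> teq t r -> teq s r.
Proof. by move=> H1 H2 W b Hb; rewrite H1 // H2. Qed.

Definition canon (t : seq (U * V)) : seq (U * V) :=
  xchoose (ex_intro (fun s => `[< teq s t >]) t (asboolT (teq_refl t))).

Lemma canonP t : teq (canon t) t.
Proof. exact/asboolP/(xchooseP (ex_intro (fun s => `[< teq s t >]) t (asboolT (teq_refl t)))). Qed.

Lemma canon_eq s t : teq s t -> canon s = canon t.
Proof.
move=> H; apply: eq_xchoose => r; apply/asboolP/asboolP => Hr.
  exact: teq_trans Hr H.
exact: teq_trans Hr (teq_sym H).
Qed.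

Lemma canon_idem t : canon (canon t) == canon t.
Proof. by apply/eqP/canon_eq/canonP. Qed.

Record Tns := MkT { tval : seq (U * V); tvalP : canon tval == tval }.
HB.instance Definition _ := [isSub for tval].
HB.instance Definition _ := [Choice of Tns by <:].

Definition mk (t : seq (U * V)) : Tns := @MkT (canon t) (canon_idem t).

Lemma mk_eq s t : teq s t -> mk s = mk t.
Proof. by move=> H; apply: val_inj => /=; apply: canon_eq. Qed.
Lemma tval_mk t : teq (tval (mk t)) t.
Proof. exact: canonP. Qed.
Lemma mk_tval x : mk (tval x) = x.
Proof. by apply: val_inj => /=; apply/eqP/tvalP. Qed.

Lemma teq_cat s s' t t' : teq s s' -> teq t t' -> teq (s ++ t) (s' ++ t').
Proof. by move=> H1 H2 W b Hb; rewrite !tapp_cat H1 // H2. Qed.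

Definition scl (k : K) (s : seq (U * V)) := map (fun p => (k *: p.1, p.2)) s.

Lemma tapp_scl (W : lmodType K) (b : U -> V -> W) k s : bilin b -> tapp b (scl k s) = k *: tapp b s.
Proof.
move=> [H1 H2]; rewrite /tapp big_map scaler_sumr; apply: eq_bigr => p _.
exact: (linZ (H1 p.2)).
Qed.
Lemma teq_scl k s t : teq s t -> teq (scl k s) (scl k t).
Proof. by move=> H W b Hb; rewrite !tapp_scl // H. Qed.

Definition tadd (x y : Tns) := mk (tval x ++ tval y).
Definition tzero := mk [::].
Definition topp (x : Tns) := mk (scl (-1) (tval x)).
Definition tscale (k : K) (x : Tns) := mk (scl k (tval x)).

Lemma taddA : associative tadd.
Proof.
move=> x y z; apply: mk_eq.
apply: (@teq_trans _ (tval x ++ tval y ++ tval z)).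
  by apply: teq_cat => //; apply: tval_mk.
rewrite catA; apply: teq_cat => //; apply: teq_sym; exact: tval_mk.
Qed.
Lemma taddC : commutative tadd.
Proof. by move=> x y; apply: mk_eq => W b Hb; rewrite !tapp_cat addrC. Qed.
Lemma tadd0 : left_id tzero tadd.
Proof.
move=> x; rewrite /tadd -[RHS]mk_tval; apply: mk_eq.
rewrite -[X in teq _ X]cat0s; apply: teq_cat => //; exact: tval_mk.
Qed.
Lemma taddN : left_inverse tzero topp tadd.
Proof.
move=> x; apply: mk_eq => W b Hb.
rewrite tapp_cat; have := tval_mk (scl (-1) (tval x)) Hb => ->.
by rewrite tapp_scl // scaleN1r addNr tapp_nil.
Qed.
HB.instance Definition _ := GRing.isZmodule.Build Tns taddA taddC tadd0 taddN.

Lemma tscaleA a b v : tscale a (tscale b v) = tscale (a * b) v.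
Proof.
apply: mk_eq => W be Hb; rewrite !tapp_scl //.
by have := tval_mk (scl b (tval v)) Hb => ->; rewrite tapp_scl // scalerA.
Qed.
Lemma tscale1 : left_id 1 tscale.
Proof.
move=> x; rewrite /tscale -[RHS]mk_tval; apply: mk_eq => W b Hb.
by rewrite tapp_scl // scale1r.
Qed.
Lemma tscaleDr : right_distributive tscale +%R.
Proof.
move=> k x y; apply: mk_eq => W b Hb.
rewrite tapp_scl // tapp_cat.
have -> := tval_mk (tval x ++ tval y) Hb.
have -> := tval_mk (scl k (tval x)) Hb.
have -> := tval_mk (scl k (tval y)) Hb.
by rewrite tapp_cat !tapp_scl // scalerDr.
Qed.
Lemma tscaleDl v : {morph tscale^~ v : a b / a + b}.
Proof.
move=> a b; apply: mk_eq => W be Hb.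
rewrite tapp_scl // tapp_cat.
have -> := tval_mk (scl a (tval v)) Hb.
have -> := tval_mk (scl b (tval v)) Hb.
by rewrite !tapp_scl // scalerDl.
Qed.
HB.instance Definition _ := GRing.Zmodule_isLmodule.Build K Tns tscaleA tscale1 tscaleDr tscaleDl.

Definition tens (u : U) (v : V) : Tns := mk [:: (u, v)].

Definition tlift (W : lmodType K) (b : U -> V -> W) (x : Tns) : W := tapp b (tval x).

Lemma tlift_mk (W : lmodType K) (b : U -> V -> W) s : bilin b -> tlift b (mk s) = tapp b s.
Proof. by move=> Hb; rewrite /tlift tval_mk. Qed.

Lemma tlift_linP (W : lmodType K) (b : U -> V -> W) : bilin b -> linearP (tlift b).
Proof.
move=> Hb k x y; rewrite /tlift.
have -> : k *: x + y = mk (scl k (tval x) ++ tval y).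
  by apply: mk_eq => W' b' Hb'; rewrite !tapp_cat (tval_mk _ Hb').
by rewrite (tval_mk _ Hb) tapp_cat tapp_scl.
Qed.

Lemma tlift_tens (W : lmodType K) (b : U -> V -> W) u v : bilin b -> tlift b (tens u v) = b u v.
Proof. by move=> Hb; rewrite tlift_mk // tapp_cons tapp_nil addr0. Qed.

Lemma mk_tapp s : mk s = tapp tens s.
Proof.
elim: s => [|p s IH]; first by rewrite tapp_nil.
rewrite tapp_cons -IH.
apply: mk_eq => W b Hb; rewrite tapp_cat (tval_mk _ Hb) (tval_mk _ Hb).
by rewrite !tapp_cons tapp_nil addr0.
Qed.

Lemma tns_repr x : x = tapp tens (tval x).
Proof. by rewrite -mk_tapp mk_tval. Qed.

Lemma tens_bilin : bilin tens.
Proof.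
split.
  move=> v k x y; apply: mk_eq => W b Hb; rewrite /tens.
  rewrite tapp_cat !(tval_mk _ Hb) tapp_scl // !(tval_mk _ Hb) !tapp_cons !tapp_nil !addr0 /=.
  by case: Hb => H1 _; rewrite H1.
move=> u k x y; apply: mk_eq => W b Hb; rewrite /tens.
rewrite tapp_cat !(tval_mk _ Hb) tapp_scl // !(tval_mk _ Hb) !tapp_cons !tapp_nil !addr0 /=.
by case: Hb => _ H2; rewrite H2.
Qed.

End Tensor.


Section Main.
Unset Implicit Arguments.
Variables (K : fieldType) (C : coalg K) (A : algType K)
  (psi : forall X Y : Ob C, Cm X Y -> A -> seq (A * Cm X Y)).
Set Implicit Arguments.
Hypothesis HC : is_coalg C.
Hypothesis HE : is_entwining psi.
Local Notation Ob := (Ob C).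
Local Notation cM := (cM K C).
Local Notation cpi := (cpi K C).
Local Notation ectr := (ectr K C A).
Local Notation eact := (eact K C A).
Local Notation Tobj := (T_obj K C A psi).
Local Notation is_ctr := (is_ctr K C).
Local Notation is_ent := (is_ent K C A psi).
Local Notation Tmor := (T_mor K C A).
Local Notation Sobj := (S_obj K C A).
Local Notation is_ctr_mor := (is_ctr_mor K C).
Local Notation is_ent_mor := (is_ent_mor K C A).

Lemma dlin (X Y Z : Ob) (W : lmodType K) (b : Cm Y Z -> Cm X Y -> W) :
  bilin b -> linearP (fun h => tapp b (delta X Y Z h)).
Proof. by case: HC => H _ _ _; apply: H. Qed.
Lemma elin (X : Ob) : linearP (eps X : Cm X X -> K^o).
Proof. by case: HC => _ H _ _; apply: H. Qed.
Lemma coass (X Y Z V : Ob) (f : Cm X V) (W : lmodType K)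
   (g : Cm Z V -> Cm Y Z -> Cm X Y -> W) : trilin g ->
   tapp (fun g1 g2 => tapp (fun h1 h2 => g h1 h2 g2) (delta Y Z V g1)) (delta X Y V f)
   = tapp (fun g1 g2 => tapp (fun h1 h2 => g g1 h1 h2) (delta X Y Z g2)) (delta X Z V f).
Proof. by case: HC => _ _ H _; apply: H. Qed.
Lemma counitL (X Y : Ob) (f : Cm X Y) :
  tapp (fun g1 g2 => eps Y g1 *: g2) (delta X Y Y f) = f.
Proof. by case: HC => _ _ _ H; case: (H X Y f). Qed.
Lemma counitR (X Y : Ob) (f : Cm X Y) :
  tapp (fun g1 g2 => eps X g2 *: g1) (delta X X Y f) = f.
Proof. by case: HC => _ _ _ H; case: (H X Y f). Qed.
Lemma counitL' (X Y : Ob) (f : Cm X Y) (W : lmodType K) (L : Cm X Y -> W) :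
  linearP L -> tapp (fun g1 g2 => eps Y g1 *: L g2) (delta X Y Y f) = L f.
Proof.
move=> HL; rewrite -{2}(counitL f) tapp_lin //.
by apply: tapp_ext => x y; rewrite linZ.
Qed.
Lemma counitR' (X Y : Ob) (f : Cm X Y) (W : lmodType K) (L : Cm X Y -> W) :
  linearP L -> tapp (fun g1 g2 => eps X g2 *: L g1) (delta X X Y f) = L f.
Proof.
move=> HL; rewrite -{2}(counitR f) tapp_lin //.
by apply: tapp_ext => x y; rewrite linZ.
Qed.

Lemma psib (X Y : Ob) (W : lmodType K) (b : A -> Cm X Y -> W) :
  bilin b -> bilin (fun f a => tapp b (psi X Y f a)).
Proof. by case: HE => H _ _ _ _; apply: H. Qed.
Lemma psid (X Y Z : Ob) (f : Cm X Z) (a : A) (W : lmodType K)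
  (g : A -> Cm Y Z -> Cm X Y -> W) : trilin g ->
  tapp (fun a' f' => tapp (g a') (delta X Y Z f')) (psi X Z f a)
  = tapp (fun g1 g2 =>
        tapp (fun a' g2' =>
                tapp (fun a'' g1' => g a'' g1' g2') (psi Y Z g1 a'))
             (psi X Y g2 a))
      (delta X Y Z f).
Proof. by case: HE => _ H _ _ _; apply: H. Qed.
Lemma psim (X Y : Ob) (f : Cm X Y) (a b : A) (W : lmodType K)
  (be : A -> Cm X Y -> W) : bilin be ->
  tapp be (psi X Y f (a * b))
  = tapp (fun a' f' => tapp (fun b' f'' => be (a' * b') f'') (psi X Y f' b))
         (psi X Y f a).
Proof. by case: HE => _ _ H _ _; apply: H. Qed.
Lemma psi1 (X Y : Ob) (f : Cm X Y) (W : lmodType K) (be : A -> Cm X Y -> W) :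
  bilin be -> tapp be (psi X Y f 1) = be 1 f.
Proof. by case: HE => _ _ _ H _; apply: H. Qed.
Lemma psie (Z : Ob) (g : Cm Z Z) (a : A) :
  tapp (fun a' g' => eps Z g' *: a') (psi Z Z g a) = eps Z g *: a.
Proof. by case: HE => _ _ _ _ H; apply: H. Qed.
Lemma psie' (Z : Ob) (g : Cm Z Z) (a : A) (W : lmodType K) (L : A -> W) :
  linearP L -> tapp (fun a' g' => eps Z g' *: L a') (psi Z Z g a) = eps Z g *: L a.
Proof.
move=> HL; rewrite -linZ // -psie tapp_lin //.
by apply: tapp_ext => x y; rewrite linZ.
Qed.

Lemma psi_linl (X Y : Ob) (W : lmodType K) (b : A -> Cm X Y -> W) a :
  bilin b -> linearP (fun f => tapp b (psi X Y f a)).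
Proof. by move=> Hb; case: (psib Hb) => H1 H2; apply: H1. Qed.
Lemma psi_linr (X Y : Ob) (W : lmodType K) (b : A -> Cm X Y -> W) f :
  bilin b -> linearP (fun a => tapp b (psi X Y f a)).
Proof. by move=> Hb; case: (psib Hb) => H1 H2; apply: H2. Qed.

Lemma homL (U V : lmodType K) (h : Hm U V) k x y : h (k *: x + y) = k *: h x + h y.
Proof. exact: hom_linP. Qed.
Lemma app2_linP (U V W : lmodType K) (F : Hm U (Hm V W)) v : linearP (fun u => F u v).
Proof. by move=> k x y; rewrite homL. Qed.

Lemma hom_comp_linP (U V W : lmodType K) (h : Hm V W) (F : U -> V) :
  linearP F -> linearP (fun u => h (F u)).
Proof. by move=> H k x y; rewrite H homL. Qed.
Lemma comp_linP (U V W : lmodType K) (f : V -> W) (g : U -> V) :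
  linearP f -> linearP g -> linearP (fun u => f (g u)).
Proof. by move=> Hf Hg k x y; rewrite Hg Hf. Qed.
Lemma add_linP (U W : lmodType K) (f g : U -> W) :
  linearP f -> linearP g -> linearP (fun x => f x + g x).
Proof. by move=> Hf Hg k x y; rewrite Hf Hg scalerDr addrACA. Qed.
Lemma homL_pt (U V W : lmodType K) (F : U -> Hm V W) :
  (forall v, linearP (fun u => F u v)) -> linearP F.
Proof. by move=> H k x y; apply: hom_ext => v; apply: (etrans (H v k x y)). Qed.
Lemma lin_app (U V W : lmodType K) (F : U -> Hm V W) v :
  linearP F -> linearP (fun u => F u v).
Proof. by move=> H k x y; rewrite H. Qed.
Lemma scal_linP (U W : lmodType K) (e : U -> K^o) (m : W) :
  linearP e -> linearP (fun f => e f *: m).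
Proof. by move=> H k x y; rewrite H scalerDl -scalerA. Qed.
Lemma eps_linP (X : Ob) (W : lmodType K) (m : W) : linearP (fun f => eps X f *: m).
Proof. exact/scal_linP/elin. Qed.

Section Free.
Variables (V : lmodType K) (X0 : Ob).
Definition Fm (Y : Ob) : lmodType K := Hm (Cm Y X0) V.
Definition Fpif (Y Z : Ob) (Phi : Hm (Cm Y Z) (Fm Z)) : Fm Y :=
  mkhom (fun h => tapp (fun h1 h2 => Phi h2 h1) (delta Y Z X0 h)).
Definition Fctr : ctr C := Ctr K C Fm (fun Y Z => mkhom (@Fpif Y Z)).

Lemma Fb_bilin (Y Z : Ob) (Phi : Hm (Cm Y Z) (Fm Z)) :
  bilin (fun h1 h2 => Phi h2 h1).
Proof. split => [h2|h1]; [exact: hom_linP | exact: app2_linP]. Qed.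
Lemma Fpif_app (Y Z : Ob) (Phi : Hm (Cm Y Z) (Fm Z)) h :
  Fpif Phi h = tapp (fun h1 h2 => Phi h2 h1) (delta Y Z X0 h).
Proof. by rewrite /Fpif mkhomK //; apply/dlin/Fb_bilin. Qed.
Lemma Fpif_linP (Y Z : Ob) : linearP (@Fpif Y Z).
Proof.
apply: homL_pt => h k x y; rewrite !Fpif_app -tappZ -tappD.
by apply: tapp_ext => h1 h2.
Qed.
Lemma Fpi_app (Y Z : Ob) (Phi : Hm (Cm Y Z) (Fm Z)) h :
  cpi Fctr Y Z Phi h = tapp (fun h1 h2 => Phi h2 h1) (delta Y Z X0 h).
Proof. by rewrite /= mkhomK ?Fpif_app //; apply: Fpif_linP. Qed.

Lemma Fctr_is_ctr : is_ctr Fctr.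
Proof.
split.
  move=> X Y Z phi [Hp1 Hp2]; apply: hom_ext => h; rewrite !Fpi_app.
  have L1 : linearP (fun f => cpi Fctr Y Z (mkhom (fun g => phi g f))).
    move=> k x y; rewrite -homL; congr (cpi _ _ _ _).
    by apply: (mkhom_linP (F := fun f g => phi g f)) => [u|v]; [apply: Hp1|apply: Hp2].
  have L2 : linearP (fun h0 : Cm X Z => tapp phi (delta X Y Z h0)) by apply: dlin.
  under tapp_ext => h1 h2 do (rewrite mkhomK // Fpi_app;
    under tapp_ext => k1 k2 do (rewrite mkhomK; last exact: Hp1)).
  under [in RHS]tapp_ext => h1 h2 do rewrite mkhomK // tapp_app.
  apply: (coass h (g := fun k1 k2 g2 => phi k2 g2 k1)).
  split.
  - by move=> v x; apply: hom_linP.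
  - by move=> u x; apply: lin_app; apply: Hp1.
  - by move=> u v; apply: lin_app; apply: Hp2.
move=> X m; apply: hom_ext => h; rewrite Fpi_app.
under tapp_ext => h1 h2 do (rewrite mkhomK; last exact: eps_linP).
by rewrite -(counitR' h (hom_linP m)); apply: tapp_ext.
Qed.
End Free.

Lemma tapp_mkhom (T1 T2 : Type) (U W : lmodType K) (F : T1 -> T2 -> U -> W) s :
  (forall x y, linearP (F x y)) ->
  tapp (fun x y => mkhom (F x y)) s = mkhom (fun v => tapp (fun x y => F x y v) s).
Proof.
move=> H; apply: hom_ext => v; rewrite tapp_app mkhomK.
  by apply: tapp_ext => x y; rewrite mkhomK; last exact: H.
by apply: tapp_linP => x y; apply: H.
Qed.

Section Tsec.
Variable M : ctr C.

Lemma Tin_linP (X Y : Ob) (phi : Hm (Cm X Y) (Hm A (cM M Y))) a :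
  linearP (fun c => tapp (fun a' c' => phi c' a') (psi X Y c a)).
Proof. by apply: psi_linl; split => [v|u]; [apply: hom_linP | apply: app2_linP]. Qed.
Lemma Tin_linPa (X Y : Ob) (phi : Hm (Cm X Y) (Hm A (cM M Y))) c :
  linearP (fun a => tapp (fun a' c' => phi c' a') (psi X Y c a)).
Proof. by apply: psi_linr; split => [v|u]; [apply: hom_linP | apply: app2_linP]. Qed.
Lemma Tmid_linP (X Y : Ob) (phi : Hm (Cm X Y) (Hm A (cM M Y))) :
  linearP (fun a => cpi M X Y (mkhom (fun c => tapp (fun a' c' => phi c' a') (psi X Y c a)))).
Proof.
apply: hom_comp_linP.
apply: (mkhom_linP (F := fun a c => tapp (fun a' c' => phi c' a') (psi X Y c a))).
  by move=> u; apply: Tin_linP.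
by move=> v; apply: Tin_linPa.
Qed.
Lemma Tout_linP (X Y : Ob) :
  linearP (fun phi : Hm (Cm X Y) (Hm A (cM M Y)) =>
    mkhom (fun a => cpi M X Y (mkhom (fun c => tapp (fun a' c' => phi c' a') (psi X Y c a))))).
Proof.
apply: mkhom_linP => [phi|a]; first exact: Tmid_linP.
apply: hom_comp_linP.
apply: (mkhom_linP (F := fun (phi : Hm (Cm X Y) (Hm A (cM M Y))) c => tapp (fun a' c' => phi c' a') (psi X Y c a))).
  by move=> u; apply: Tin_linP.
by move=> c; apply: tapp_linP => a' c'; apply: lin_app; apply: lin_app.
Qed.

Lemma Tpi_app (X Y : Ob) (phi : Hm (Cm X Y) (Hm A (cM M Y))) a :
  cpi (ectr (Tobj M)) X Y phi a
  = cpi M X Y (mkhom (fun c => tapp (fun a' c' => phi c' a') (psi X Y c a))).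
Proof. by rewrite /= mkhomK ?mkhomK //; [apply: Tmid_linP | apply: Tout_linP]. Qed.

Lemma rmul_linP (U : lmodType K) (g : Hm A U) b : linearP (fun a => g (a * b)).
Proof. by move=> k x y; rewrite mulrDl -scalerAl homL. Qed.

Lemma Tact_app (X : Ob) b (g : Hm A (cM M X)) a : eact (Tobj M) X b g a = g (a * b).
Proof. by rewrite /= mkhomK //; apply: rmul_linP. Qed.

Lemma Tact_linb (X : Ob) (g : Hm A (cM M X)) : linearP (fun b => eact (Tobj M) X b g).
Proof.
apply: homL_pt => a k x y; rewrite !Tact_app mulrDr -scalerAr homL.
by rewrite -Tact_app.
Qed.
Lemma Tact_ling (X : Ob) b : linearP (eact (Tobj M) X b).
Proof. by apply: homL_pt => a k x y; rewrite !Tact_app. Qed.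

Lemma T_is_ent : is_ctr M -> is_ent (Tobj M).
Proof.
move=> [Mco Mcu]; split.
- split.
  + move=> X Y Z phi [Hp1 Hp2]; apply: hom_ext => a.
    rewrite !Tpi_app.
    pose Phi g c := tapp (fun a' c' => tapp (fun a'' g' => phi g' c' a'') (psi Y Z g a')) (psi X Y c a).
    have HPhi : bilin Phi.
      split.
      * move=> c; apply: tapp_linP => a' c'; apply: psi_linl.
        split => [v|u]; [exact: hom_linP | apply: lin_app; exact: Hp1].
      * move=> g; apply: psi_linl; split => [v|u].
          apply: psi_linr; split => [v'|u']; [exact: hom_linP | apply: lin_app; exact: Hp1].
        by apply: tapp_linP => a'' g'; apply: lin_app; apply: Hp2.
    transitivity (cpi M X Y (mkhom (fun c => cpi M Y Z (mkhom (fun g => Phi g c))))).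
      apply: (congr1 (cpi M X Y)); apply: mkhom_ext => c.
      have L1 : linearP (fun f => cpi (ectr (Tobj M)) Y Z (mkhom (fun g => phi g f))).
        apply: hom_comp_linP; apply: (mkhom_linP (F := fun f g => phi g f)) => [u|v].
          exact: Hp1.
        exact: Hp2.
      under tapp_ext => a' c' do rewrite mkhomK // Tpi_app.
      rewrite -tapp_lin; last exact: hom_linP.
      apply: (congr1 (cpi M Y Z)); rewrite tapp_mkhom; last by move=> x y; apply: Tin_linP.
      apply: mkhom_ext => g; rewrite /Phi; apply: tapp_ext => a' c'.
      by apply: tapp_ext => a'' g'; rewrite mkhomK //; apply: Hp1.
    rewrite Mco //; apply: (congr1 (cpi M X Z)); apply: mkhom_ext => h.
    rewrite /Phi.
    have L2 : linearP (fun h0 : Cm X Z => tapp phi (delta X Y Z h0)) by apply: dlin.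
    under [in RHS]tapp_ext => a' c' do rewrite mkhomK // tapp_app.
    symmetry; apply: (psid h a (g := fun a0 k1 k2 => phi k1 k2 a0)).
    split.
    * by move=> v x; apply: hom_linP.
    * by move=> u x; apply: lin_app; apply: Hp1.
    * by move=> u v; apply: lin_app; apply: Hp2.
  + move=> X m; apply: hom_ext => a; rewrite Tpi_app.
    transitivity (cpi M X X (mkhom (fun c => eps X c *: m a))); last exact: Mcu.
    apply: (congr1 (cpi M X X)); apply: mkhom_ext => c.
    under tapp_ext => a' c' do (rewrite mkhomK; last exact: eps_linP).
    rewrite -(psie' c a (hom_linP m)); by apply: tapp_ext.
- move=> X; split => [g|b]; [exact: Tact_linb | exact: Tact_ling].
- by move=> X a b m; apply: hom_ext => x; rewrite !Tact_app mulrA.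
- by move=> X m; apply: hom_ext => x; rewrite Tact_app mulr1.
- move=> X Y phi a; apply: hom_ext => x.
  rewrite Tact_app !Tpi_app; apply: (congr1 (cpi M X Y)); apply: mkhom_ext => c.
  rewrite psim; last by split => [v|u]; [exact: hom_linP | exact: app2_linP].
  have L3 : forall a', linearP (fun c0 => tapp (fun a'0 c'0 => eact (Tobj M) Y a'0 (phi c'0)) (psi X Y c0 a')).
    move=> a'; apply: psi_linl; split => [v|u]; first exact: Tact_linb.
    by apply: comp_linP; [exact: Tact_ling | exact: hom_linP].
  apply: tapp_ext => x' c'.
  rewrite mkhomK // tapp_app; apply: tapp_ext => a' c''.
  by rewrite Tact_app.
Qed.

End Tsec.
Lemma ent_linl (N : ent K C A) (HN : is_ent N) X m : linearP (fun a => eact N X a m).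
Proof. by case: HN => _ H _ _ _; case: (H X) => H1 _; apply: H1. Qed.
Lemma ent_linr (N : ent K C A) (HN : is_ent N) X a : linearP (eact N X a).
Proof. by case: HN => _ H _ _ _; case: (H X) => _ H2; apply: H2. Qed.
Lemma ent_ctr (N : ent K C A) (HN : is_ent N) : is_ctr (ectr N).
Proof. by case: HN. Qed.
Lemma ent_mul (N : ent K C A) (HN : is_ent N) X a b m :
  eact N X (a * b) m = eact N X a (eact N X b m).
Proof. by case: HN => _ _ H _ _; apply: H. Qed.
Lemma ent_one (N : ent K C A) (HN : is_ent N) X m : eact N X 1 m = m.
Proof. by case: HN => _ _ _ H _; apply: H. Qed.
Lemma ent_comp (N : ent K C A) (HN : is_ent N) X Y (phi : Hm (Cm X Y) (cM (ectr N) Y)) a :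
  eact N X a (cpi (ectr N) X Y phi)
  = cpi (ectr N) X Y
      (mkhom (fun c => tapp (fun a' c' => eact N Y a' (phi c')) (psi X Y c a))).
Proof. by case: HN => _ _ _ _ H; apply: H. Qed.
Lemma ent_bil (N : ent K C A) (HN : is_ent N) X : bilin (eact N X).
Proof. by split => [v|u]; [apply: ent_linl | apply: ent_linr]. Qed.

Lemma Tmor_app (M N : ctr C) (h : forall X, Hm (cM M X) (cM N X)) X g a :
  Tmor M N h X g a = h X (g a).
Proof.
rewrite /T_mor mkhomK ?mkhomK //.
  by apply: hom_comp_linP; apply: hom_linP.
by apply: homL_pt => a' k x y; rewrite !mkhomK ?homL //; apply: hom_comp_linP; apply: hom_linP.
Qed.

Lemma ctr_co (M : ctr C) (HM : is_ctr M) (X Y Z : Ob) (phi : Cm Y Z -> Cm X Y -> cM M Z) :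
  bilin phi ->
  cpi M X Y (mkhom (fun f => cpi M Y Z (mkhom (fun g => phi g f))))
  = cpi M X Z (mkhom (fun h => tapp phi (delta X Y Z h))).
Proof. by case: HM => H _; apply: H. Qed.
Lemma ctr_cu (M : ctr C) (HM : is_ctr M) (X : Ob) (m : cM M X) :
  cpi M X X (mkhom (fun f => eps X f *: m)) = m.
Proof. by case: HM => _ H; apply: H. Qed.

Section Back.
Unset Implicit Arguments.
Variables (sigma : forall X : Ob, Cm X X -> A -> K)
          (lam : forall X : Ob, Cm X X -> seq (A * A)).
Set Implicit Arguments.
Hypothesis HV : in_V1 psi sigma.
Hypothesis HW : in_W1 psi lam.
Hypothesis Heq1 : forall (X : Ob) (f : Cm X X),
            eps X f *: (1 : A)
            = tapp (fun f1 f2 =>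
                      tapp (fun l1 l2 => sigma X f1 l1 *: l2) (lam X f2))
                   (delta X X X f).
Hypothesis Heq2 : forall (X : Ob) (f : Cm X X),
            eps X f *: (1 : A)
            = tapp (fun f1 f2 =>
                      tapp (fun l1 l2 =>
                              tapp (fun l1' f1' => sigma X f1' l2 *: l1')
                                   (psi X X f1 l1))
                           (lam X f2))
                   (delta X X X f).

Lemma sig_bil X : bilin (sigma X : Cm X X -> A -> K^o).
Proof. by case: HV => H _; apply: H. Qed.
Lemma sig_linf X a : linearP (fun f => sigma X f a : K^o).
Proof. by case: (sig_bil X) => H _; apply: H. Qed.
Lemma sig_lina X f : linearP (fun a => sigma X f a : K^o).
Proof. by case: (sig_bil X) => _ H; apply: H. Qed.
Lemma lam_lin X (W : lmodType K) (b : A -> A -> W) :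
  bilin b -> linearP (fun g => tapp b (lam X g)).
Proof. by case: HW => H _ _; apply: H. Qed.
Lemma lam_nat (X Y : Ob) (f : Cm X Y) (W : lmodType K) (g : A -> A -> Cm X Y -> W) :
  trilin g ->
  tapp (fun g1 g2 => tapp (fun l1 l2 => g l1 l2 g2) (lam Y g1)) (delta X Y Y f)
  = tapp (fun g1 g2 =>
         tapp (fun l1 l2 =>
                 tapp (fun l1' g1' =>
                         tapp (fun l2' g1'' => g l1' l2' g1'') (psi X Y g1' l2))
                      (psi X Y g1 l1))
              (lam X g2))
         (delta X X Y f).
Proof. by case: HW => _ H _; apply: H. Qed.
Lemma lam_comm (Z : Ob) (g : Cm Z Z) (a : A) (W : lmodType K) (b : A -> A -> W) :
  bilin b ->
  tapp (fun l1 l2 => b l1 (l2 * a)) (lam Z g)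
  = tapp (fun a' g' => tapp (fun l1 l2 => b (a' * l1) l2) (lam Z g')) (psi Z Z g a).
Proof. by case: HW => _ _ H; apply: H. Qed.

Lemma smul_lin' (W : lmodType K) (m : W) : linearP (fun k : K^o => k *: m).
Proof. by move=> k x y; rewrite scalerDl scalerA. Qed.
Lemma scal_lin2 (W : lmodType K) (k : K) : linearP (fun m : W => k *: m).
Proof. by move=> c x y; rewrite scalerDr !scalerA mulrC. Qed.

Definition etaB (M : ctr C) (X : Ob) : Hm (cM M X) (Hm A (cM M X)) :=
  mkhom (fun m => mkhom (fun a => cpi M X X (mkhom (fun f => sigma X f a *: m)))).

Lemma etaB_in (M : ctr C) X a : linearP (fun m : cM M X => mkhom (fun f => sigma X f a *: m)).
Proof.
apply: mkhom_linP => [m|f]; first by apply: scal_linP; apply: sig_linf.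
exact: scal_lin2.
Qed.
Lemma etaB_mid (M : ctr C) X (m : cM M X) :
  linearP (fun a => cpi M X X (mkhom (fun f => sigma X f a *: m))).
Proof.
apply: hom_comp_linP; apply: (mkhom_linP (F := fun a f => sigma X f a *: m)) => [a|f].
  by apply: scal_linP; apply: sig_linf.
by apply: scal_linP; apply: sig_lina.
Qed.
Lemma etaB_app (M : ctr C) X m a :
  etaB M X m a = cpi M X X (mkhom (fun f => sigma X f a *: m)).
Proof.
rewrite /etaB mkhomK ?mkhomK //; first exact: etaB_mid.
apply: mkhom_linP => [m'|a0]; [exact: etaB_mid | apply: hom_comp_linP; exact: etaB_in].
Qed.

Definition epsB (N : ent K C A) (X : Ob) : Hm (Hm A (cM (ectr N) X)) (cM (ectr N) X) :=
  mkhom (fun g : Hm A (cM (ectr N) X) => cpi (ectr N) X X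
    (mkhom (fun f => tapp (fun l1 l2 => eact N X l1 (g l2)) (lam X f)))).

Lemma epsB_bil (N : ent K C A) (HN : is_ent N) X (g : Hm A (cM (ectr N) X)) :
  bilin (fun l1 l2 => eact N X l1 (g l2)).
Proof.
split => [v|u]; first exact: ent_linl.
by apply: comp_linP; [exact: ent_linr | exact: hom_linP].
Qed.
Lemma epsB_app (N : ent K C A) (HN : is_ent N) X g :
  epsB N X g = cpi (ectr N) X X
    (mkhom (fun f => tapp (fun l1 l2 => eact N X l1 (g l2)) (lam X f))).
Proof.
rewrite /epsB mkhomK //; apply: hom_comp_linP.
apply: (mkhom_linP (F := fun (g : Hm A (cM (ectr N) X)) f => tapp (fun l1 l2 => eact N X l1 (g l2)) (lam X f))) => [g'|f].
  by apply: lam_lin; apply: epsB_bil.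
apply: tapp_linP => l1 l2; apply: comp_linP; [exact: ent_linr | exact: app_linP].
Qed.

Lemma tapp_hom (T1 T2 : Type) (U V : lmodType K) (h : Hm U V) (b : T1 -> T2 -> U) s :
  h (tapp b s) = tapp (fun x y => h (b x y)) s.
Proof. by rewrite tapp_lin //; apply: hom_linP. Qed.

Lemma cpi_congr (M : ctr C) X Y (f g : Cm X Y -> cM M Y) :
  (forall c, f c = g c) -> cpi M X Y (mkhom f) = cpi M X Y (mkhom g).
Proof. by move=> H; rewrite (mkhom_ext H). Qed.

Lemma etaB_nat (M M' : ctr C) (h : forall X, Hm (cM M X) (cM M' X)) :
  is_ctr_mor M M' h ->
  forall X m, Tmor M M' h X (etaB M X m) = etaB M' X (h X m).
Proof.
move=> Hh X m; apply: hom_ext => a; rewrite Tmor_app !etaB_app Hh.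
apply: cpi_congr => f; rewrite mkhomK ?homZ //.
by apply: scal_linP; apply: sig_linf.
Qed.

Lemma epsB_nat (N N' : ent K C A) (k : forall X, Hm (cM (ectr N) X) (cM (ectr N') X)) :
  is_ent N -> is_ent N' -> is_ent_mor N N' k ->
  forall X g, epsB N' X (Tmor (ectr N) (ectr N') k X g) = k X (epsB N X g).
Proof.
move=> HN HN' [Hk1 Hk2] X g; rewrite !epsB_app // Hk1.
apply: cpi_congr => f; rewrite mkhomK; last by apply: lam_lin; apply: epsB_bil.
rewrite tapp_lin; last exact: hom_linP.
by apply: tapp_ext => l1 l2; rewrite Tmor_app Hk2.
Qed.

Lemma epsB_eta (N : ent K C A) : is_ent N ->
  forall X m, epsB N X (etaB (ectr N) X m) = m.
Proof.
move=> HN X m; rewrite epsB_app //.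
pose Phi (c f : Cm X X) := tapp (fun l1 l2 => tapp (fun a' c' => sigma X c' l2 *: eact N X a' m) (psi X X c l1)) (lam X f).
have HPhi : bilin Phi.
  split => [f|c].
    apply: tapp_linP => l1 l2; apply: psi_linl; split => [v|u].
      by apply: comp_linP; [exact: scal_lin2 | exact: ent_linl].
    by apply: scal_linP; apply: sig_linf.
  apply: lam_lin; split => [v|u].
    apply: psi_linr; split => [v'|u'].
      by apply: comp_linP; [exact: scal_lin2 | exact: ent_linl].
    by apply: scal_linP; apply: sig_linf.
  by apply: tapp_linP => a' c'; apply: scal_linP; apply: sig_lina.
transitivity (cpi (ectr N) X X (mkhom (fun f => cpi (ectr N) X X (mkhom (fun c => Phi c f))))).
  apply: cpi_congr => f.
  under tapp_ext => l1 l2 do rewrite etaB_app ent_comp //.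
  rewrite -tapp_lin; last exact: hom_linP.
  apply: congr1; rewrite tapp_mkhom; last first.
    move=> l1 l2; apply: psi_linl; split => [v|u]; first exact: ent_linl.
    by apply: comp_linP; [exact: ent_linr | exact: hom_linP].
  apply: mkhom_ext => c; rewrite /Phi; apply: tapp_ext => l1 l2.
  apply: tapp_ext => a' c'; rewrite mkhomK; last by apply: scal_linP; apply: sig_linf.
  by rewrite linZ //; apply: ent_linr.
rewrite (ctr_co (ent_ctr HN)) //.
rewrite -[RHS](ctr_cu (ent_ctr HN) m); apply: cpi_congr => h.
transitivity (eact N X (eps X h *: 1) m); last first.
  by rewrite (linZ (@ent_linl N HN X m)) ent_one.
have EL := @ent_linl N HN X m.
rewrite Heq2 (tapp_lin (L := fun a => eact N X a m)) //.
apply: tapp_ext => f1 f2; rewrite /Phi (tapp_lin (L := fun a => eact N X a m)) //.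
apply: tapp_ext => l1 l2; rewrite (tapp_lin (L := fun a => eact N X a m)) //.
by apply: tapp_ext => a' c'; rewrite (linZ EL).
Qed.

Lemma epsB_T (M : ctr C) : is_ctr M ->
  forall X g, epsB (Tobj M) X (Tmor M (Sobj (Tobj M)) (etaB M) X g) = g.
Proof.
move=> HM X g; have HT := T_is_ent HM.
rewrite epsB_app //; apply: hom_ext => a; rewrite Tpi_app.
pose Phi (f' c : Cm X X) := tapp (fun l1 l2 => sigma X f' l1 *: g (l2 * a)) (lam X c).
have HPhi : bilin Phi.
  split => [c|f'].
    by apply: tapp_linP => l1 l2; apply: scal_linP; apply: sig_linf.
  apply: lam_lin; split => [v|u].
    by apply: scal_linP; apply: sig_lina.
  by apply: comp_linP; [exact: scal_lin2 | exact: rmul_linP].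
transitivity (cpi M X X (mkhom (fun c => cpi M X X (mkhom (fun f' => Phi f' c))))).
  apply: cpi_congr => c.
  have L1 : linearP (fun f : Cm X X => tapp (fun l1 l2 => eact (Tobj M) X l1
       (Tmor M (Sobj (Tobj M)) (etaB M) X g l2)) (lam X f)).
    by apply: lam_lin; apply: epsB_bil.
  under tapp_ext => a' c' do rewrite mkhomK // tapp_app.
  under tapp_ext => a' c' do under tapp_ext => l1 l2 do rewrite Tact_app Tmor_app.
  rewrite -(lam_comm c a (b := fun l1 l2 => etaB M X (g l2) l1)); last first.
    split => [v|u]; first exact: hom_linP.
    by apply: lin_app; apply: hom_comp_linP; apply: hom_linP.
  under tapp_ext => l1 l2 do rewrite etaB_app.
  rewrite -tapp_lin; last exact: hom_linP.
  apply: congr1; rewrite tapp_mkhom; last by move=> x y; apply: scal_linP; apply: sig_linf.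
  by apply: mkhom_ext => f'.
rewrite (ctr_co HM) //.
rewrite -[RHS](ctr_cu HM (g a)); apply: cpi_congr => h.
transitivity (g ((eps X h *: 1) * a)); last by rewrite -scalerAl mul1r homZ.
rewrite Heq1 (tapp_lin (L := fun x => g (x * a))); last exact: rmul_linP.
apply: tapp_ext => f1 f2; rewrite /Phi (tapp_lin (L := fun x => g (x * a))); last exact: rmul_linP.
by apply: tapp_ext => l1 l2; rewrite -scalerAl homZ.
Qed.

Lemma etaB_mor (M : ctr C) : is_ctr M -> is_ctr_mor M (Sobj (Tobj M)) (etaB M).
Proof.
move=> HM X Y phi; apply: hom_ext => a; rewrite etaB_app Tpi_app.
pose Phi (g : Cm X Y) (f : Cm X X) := sigma X f a *: phi g.
have HPhi : bilin Phi.
  split => [f|g]; first by apply: comp_linP; [exact: scal_lin2 | exact: hom_linP].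
  by apply: scal_linP; apply: sig_linf.
pose Phi' (g : Cm Y Y) (c : Cm X Y) := tapp (fun a' c' => sigma Y g a' *: phi c') (psi X Y c a).
have HPhi' : bilin Phi'.
  split => [c|g].
    by apply: tapp_linP => a' c'; apply: scal_linP; apply: sig_linf.
  apply: psi_linl; split => [v|u].
    by apply: scal_linP; apply: sig_lina.
  by apply: comp_linP; [exact: scal_lin2 | exact: hom_linP].
transitivity (cpi M X X (mkhom (fun f => cpi M X Y (mkhom (fun g => Phi g f))))).
  apply: cpi_congr => f; rewrite -homZ; apply: congr1.
  apply: hom_ext => g; rewrite mkhomK //; apply: comp_linP; [exact: scal_lin2 | exact: hom_linP].
rewrite (ctr_co HM) //.
transitivity (cpi M X Y (mkhom (fun c => cpi M Y Y (mkhom (fun g => Phi' g c))))); last first.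
  apply: cpi_congr => c.
  have L : linearP (fun c0 => etaB M Y (phi c0)) by apply: hom_comp_linP; apply: hom_linP.
  under tapp_ext => a' c' do rewrite mkhomK // etaB_app.
  rewrite -tapp_lin; last exact: hom_linP.
  apply: congr1; rewrite tapp_mkhom; last by move=> x y; apply: scal_linP; apply: sig_linf.
  by apply: mkhom_ext => g.
rewrite (ctr_co HM) //; apply: cpi_congr => h.
rewrite /Phi /Phi'.
transitivity (phi (tapp (fun g1 g2 => sigma X g2 a *: g1) (delta X X Y h))).
  by rewrite tapp_hom; apply: tapp_ext => x y; rewrite homZ.
case: HV => _ <-.
rewrite tapp_hom; apply: tapp_ext => x y.
by rewrite tapp_hom; apply: tapp_ext => x' y'; rewrite homZ.
Qed.

Lemma epsB_mor2 (N : ent K C A) : is_ent N ->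
  forall X a m, epsB N X (eact (Tobj (Sobj N)) X a m) = eact N X a (epsB N X m).
Proof.
move=> HN X a m; rewrite !epsB_app // ent_comp //; apply: cpi_congr => f.
under tapp_ext => l1 l2 do rewrite Tact_app.
have L1 : linearP (fun f0 : Cm X X => tapp (fun l1 l2 => eact N X l1 (m l2)) (lam X f0)).
  by apply: lam_lin; apply: epsB_bil.
rewrite [RHS](tapp_ext (b2 := fun a' c' => tapp (fun l1 l2 => eact N X (a' * l1) (m l2)) (lam X c'))); last first.
  move=> a' c'; rewrite mkhomK // (tapp_lin (L := eact N X a')); last exact: ent_linr.
  by apply: tapp_ext => l1 l2; rewrite (ent_mul HN).
by rewrite (lam_comm f a (b := fun l1 l2 => eact N X l1 (m l2))) //; apply: epsB_bil.
Qed.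

Lemma epsB_mor1 (N : ent K C A) : is_ent N ->
  is_ctr_mor (Sobj (Tobj (Sobj N))) (Sobj N) (epsB N).
Proof.
move=> HN X Y phi; rewrite !epsB_app //.
have HNc := ent_ctr HN.
pose G (l1 l2 : A) (c : Cm X Y) := eact N Y l1 (phi c l2).
have HG : trilin G.
  split.
  - by move=> v x; apply: ent_linl.
  - by move=> u x; apply: comp_linP; [exact: ent_linr | exact: hom_linP].
  - by move=> u v; apply: comp_linP; [exact: ent_linr | apply: lin_app; exact: hom_linP].
pose Phi (c : Cm X Y) (f : Cm X X) := tapp (fun l1 l2 => tapp (fun a' c' =>
   tapp (fun a'' c'' => G a' a'' c'') (psi X Y c' l2)) (psi X Y c l1)) (lam X f).
have Hin : forall a', bilin (fun a'' c'' => G a' a'' c'').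
  by move=> a'; case: HG => H1 H2 H3; split => [v|u]; [apply: H2 | apply: H3].
have Hmid : forall l2, bilin (fun a' c' => tapp (fun a'' c'' => G a' a'' c'') (psi X Y c' l2)).
  move=> l2; split => [v|u].
    by apply: tapp_linP => a'' c''; case: HG => H1 _ _; apply: H1.
  by apply: psi_linl; apply: Hin.
have HPhi : bilin Phi.
  split => [f|c].
    by apply: tapp_linP => l1 l2; apply: psi_linl.
  apply: lam_lin; split => [v|u].
    by apply: psi_linr.
  by apply: tapp_linP => a' c'; apply: psi_linr.
pose Phi' (g : Cm Y Y) (c : Cm X Y) := tapp (fun l1 l2 => G l1 l2 c) (lam Y g).
have HPhi' : bilin Phi'.
  split => [c|g].
    by apply: lam_lin; case: HG => H1 H2 H3; split => [v|u]; [apply: H1 | apply: H2].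
  by apply: tapp_linP => l1 l2; case: HG => _ _ H3; apply: H3.
transitivity (cpi (ectr N) X X (mkhom (fun f => cpi (ectr N) X Y (mkhom (fun c => Phi c f))))).
  apply: cpi_congr => f.
  under tapp_ext => l1 l2 do rewrite Tpi_app ent_comp //.
  rewrite -tapp_lin; last exact: hom_linP.
  apply: congr1; rewrite tapp_mkhom; last first.
    move=> l1 l2; apply: psi_linl; split => [v|u]; first exact: ent_linl.
    by apply: comp_linP; [exact: ent_linr | exact: hom_linP].
  apply: mkhom_ext => c; rewrite /Phi; apply: tapp_ext => l1 l2.
  apply: tapp_ext => a' c'; rewrite mkhomK; last exact: Tin_linP.
  by rewrite (tapp_lin (L := eact N Y a')) //; apply: ent_linr.
rewrite (ctr_co HNc) //.
transitivity (cpi (ectr N) X Y (mkhom (fun c => cpi (ectr N) Y Y (mkhom (fun g => Phi' g c))))); last first.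
  by apply: cpi_congr => c; rewrite epsB_app.
rewrite (ctr_co HNc) //; apply: cpi_congr => h.
by rewrite /Phi /Phi' (lam_nat h HG).
Qed.

Lemma back_adj : T_left_adjoint_S psi.
Proof.
exists etaB, epsB; split; split.
- exact: etaB_mor.
- by move=> N HN; split; [exact: epsB_mor1 | exact: epsB_mor2].
- by move=> M M' h _ _ Hh X m; apply: etaB_nat.
- by move=> N N' k HN HN' Hk X g; apply: epsB_nat.
- exact: epsB_T.
- exact: epsB_eta.
Qed.

End Back.

Lemma scal_lin3 (W : lmodType K) (k : K) : linearP (fun m : W => k *: m).
Proof. by move=> c x y; rewrite scalerDr !scalerA mulrC. Qed.
Section PSec.
Variable X0 : Ob.
Local Notation TT := (Tns A A).

Definition lmulT (a : A) : TT -> TT := tlift (fun x y => tens (a * x) y).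
Lemma lmulT_bil a : bilin (fun x y : A => tens (a * x) y).
Proof.
split => [v|u].
  move=> k x y; rewrite mulrDr -scalerAr.
  by case: (tens_bilin A A) => H _; rewrite H.
by case: (tens_bilin A A) => _ H; apply: H.
Qed.
Lemma lmulT_lin a : linearP (lmulT a).
Proof. exact/tlift_linP/lmulT_bil. Qed.
Lemma lmulT_tens a x y : lmulT a (tens x y) = tens (a * x) y.
Proof. exact/tlift_tens/lmulT_bil. Qed.
Lemma tns_ind (W : lmodType K) (f g : TT -> W) : linearP f -> linearP g ->
  (forall x y, f (tens x y) = g (tens x y)) -> forall t, f t = g t.
Proof.
move=> Hf Hg H t; rewrite (tns_repr t) (tapp_lin (L := f)) // (tapp_lin (L := g)) //.
by apply: tapp_ext.
Qed.
Lemma lmulT_lina t : linearP (fun a => lmulT a t).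
Proof.
move=> k a b.
pose f t := lmulT (k *: a + b) t; pose g t := k *: lmulT a t + lmulT b t.
have Hf : linearP f by exact: lmulT_lin.
have Hg : linearP g.
  apply: add_linP; last exact: lmulT_lin.
  by apply: comp_linP; [exact: scal_lin3 | exact: lmulT_lin].
apply: (tns_ind Hf Hg) => x y; rewrite /f /g !lmulT_tens mulrDl -scalerAl.
by case: (tens_bilin A A) => H _; rewrite H.
Qed.
Lemma lmulT_mul a b t : lmulT (a * b) t = lmulT a (lmulT b t).
Proof.
apply: (tns_ind (f := lmulT (a * b)) (g := fun t => lmulT a (lmulT b t))).
- exact: lmulT_lin.
- by apply: comp_linP; apply: lmulT_lin.
- by move=> x y; rewrite !lmulT_tens mulrA.
Qed.
Lemma lmulT_one t : lmulT 1 t = t.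
Proof.
apply: (tns_ind (f := lmulT 1) (g := id)) => //; first exact: lmulT_lin.
by move=> x y; rewrite lmulT_tens mul1r.
Qed.
Lemma lmulT_bil2 (Y : Ob) (phi : Hm (Cm Y X0) TT) : bilin (fun a' c' => lmulT a' (phi c')).
Proof.
split => [v|u]; first exact: lmulT_lina.
by apply: comp_linP; [exact: lmulT_lin | exact: hom_linP].
Qed.

Definition Pctr := Fctr TT X0.
Definition Pact (Y : Ob) (a : A) (phi : cM Pctr Y) : cM Pctr Y :=
  mkhom (fun c => tapp (fun a' c' => lmulT a' (phi c')) (psi Y X0 c a)).
Definition Pent : ent K C A := Ent K C A Pctr Pact.

Lemma Pact_app Y a (phi : cM Pctr Y) c :
  Pact a phi c = tapp (fun a' c' => lmulT a' (phi c')) (psi Y X0 c a).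
Proof. by rewrite /Pact mkhomK //; apply: psi_linl; apply: lmulT_bil2. Qed.

Lemma Pent_act Y a phi : eact Pent Y a phi = Pact a phi.
Proof. by []. Qed.

Lemma Ppi_app (Y Z : Ob) (Phi : Hm (Cm Y Z) (cM Pctr Z)) h :
  cpi (ectr Pent) Y Z Phi h = tapp (fun h1 h2 => Phi h2 h1) (delta Y Z X0 h).
Proof. exact: Fpi_app. Qed.

Lemma Pent_is_ent : is_ent Pent.
Proof.
split.
- exact: Fctr_is_ctr.
- move=> Y; split => [phi|a].
    apply: homL_pt => c k x y; rewrite /= !Pact_app.
    by apply: psi_linr; apply: lmulT_bil2.
  apply: homL_pt => c k x y; rewrite /= !Pact_app -tappZ -tappD.
  by apply: tapp_ext => a' c'; rewrite lmulT_lin.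
- move=> Y a b phi; apply: hom_ext => c; rewrite /= !Pact_app psim; last exact: lmulT_bil2.
  apply: tapp_ext => a' c'; rewrite Pact_app (tapp_lin (L := lmulT a')); last exact: lmulT_lin.
  by apply: tapp_ext => b' c''; rewrite lmulT_mul.
- move=> Y phi; apply: hom_ext => c; rewrite /= Pact_app psi1; last exact: lmulT_bil2.
  by rewrite lmulT_one.
- move=> X Y phi a; apply: hom_ext => h; rewrite Pent_act Pact_app !Fpi_app.
  under tapp_ext => a' c' do rewrite Ppi_app (tapp_lin (L := lmulT a') _ _ (lmulT_lin a')).
  rewrite (psid h a (g := fun a0 k1 k2 => lmulT a0 (phi k2 k1))); last first.
    split.
    + by move=> v x; apply: lmulT_lina.
    + by move=> u x; apply: comp_linP; [exact: lmulT_lin | exact: hom_linP].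
    + by move=> u v; apply: comp_linP; [exact: lmulT_lin | apply: lin_app; exact: hom_linP].
  have L : linearP (fun c0 : Cm X Y => tapp (fun a' c' => Pact a' (phi c')) (psi X Y c0 a)).
    apply: psi_linl; split => [v|u].
      by apply: homL_pt => c k x y; rewrite !Pact_app; apply: psi_linr; apply: lmulT_bil2.
    apply: comp_linP; last exact: hom_linP.
    by apply: homL_pt => c k x y; rewrite /= !Pact_app -tappZ -tappD; apply: tapp_ext => a' c'; rewrite lmulT_lin.
  apply: tapp_ext => h1 h2; rewrite mkhomK // tapp_app.
  by apply: tapp_ext => a' c'; rewrite Pact_app.
Qed.

Definition g0 : Hm A (cM Pctr X0) := mkhom (fun a => mkhom (fun c => eps X0 c *: tens 1 a)).
Lemma g0_app a c : g0 a c = eps X0 c *: tens 1 a.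
Proof.
rewrite /g0 mkhomK ?mkhomK //; first exact: eps_linP.
apply: (mkhom_linP (F := fun a c => eps X0 c *: tens 1 a)) => [a'|c'].
  exact: eps_linP.
apply: comp_linP; first exact: scal_lin3.
by case: (tens_bilin A A) => _ H; apply: H.
Qed.

Section Psi.
Variables (N : ent K C A) (HN : is_ent N) (u : Hm A (cM (ectr N) X0)).
Definition bu : TT -> cM (ectr N) X0 := tlift (fun x y => eact N X0 x (u y)).
Lemma bu_bil : bilin (fun x y => eact N X0 x (u y)).
Proof.
split => [v|w]; first exact: ent_linl.
by apply: comp_linP; [exact: ent_linr | exact: hom_linP].
Qed.
Lemma bu_lin : linearP bu.
Proof. exact/tlift_linP/bu_bil. Qed.
Lemma bu_tens x y : bu (tens x y) = eact N X0 x (u y).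
Proof. exact/tlift_tens/bu_bil. Qed.
Lemma bu_lmul a t : bu (lmulT a t) = eact N X0 a (bu t).
Proof.
apply: (tns_ind (f := fun t => bu (lmulT a t)) (g := fun t => eact N X0 a (bu t))).
- by apply: comp_linP; [exact: bu_lin | exact: lmulT_lin].
- by apply: comp_linP; [exact: ent_linr | exact: bu_lin].
- by move=> x y; rewrite lmulT_tens !bu_tens (ent_mul HN).
Qed.

Definition Psif (Y : Ob) (phi : cM Pctr Y) : cM (ectr N) Y :=
  cpi (ectr N) Y X0 (mkhom (fun c => bu (phi c))).
Lemma Psif_in Y (phi : cM Pctr Y) : linearP (fun c => bu (phi c)).
Proof. by apply: comp_linP; [exact: bu_lin | exact: hom_linP]. Qed.
Lemma Psif_lin Y : linearP (@Psif Y).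
Proof.
apply: hom_comp_linP; apply: (mkhom_linP (F := fun (phi : cM Pctr Y) c => bu (phi c))) => [phi|c].
  exact: Psif_in.
by apply: comp_linP; [exact: bu_lin | exact: lin_app].
Qed.
Definition Psi (Y : Ob) : Hm (cM Pctr Y) (cM (ectr N) Y) := mkhom (@Psif Y).
Lemma Psi_app Y phi : Psi Y phi = cpi (ectr N) Y X0 (mkhom (fun c => bu (phi c))).
Proof. by rewrite /Psi mkhomK //; apply: Psif_lin. Qed.

Lemma Psi_mor : is_ent_mor Pent N Psi.
Proof.
have HNc := ent_ctr HN.
split.
  move=> X Y phi; rewrite Psi_app.
  transitivity (cpi (ectr N) X Y (mkhom (fun c => cpi (ectr N) Y X0 (mkhom (fun g => bu (phi c g)))))); last first.
    by apply: cpi_congr => c; rewrite Psi_app.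
  rewrite (ctr_co HNc); last first.
    split => [v|w]; first by apply: comp_linP; [exact: bu_lin | exact: hom_linP].
    by apply: comp_linP; [exact: bu_lin | exact: app2_linP].
  apply: cpi_congr => h; rewrite Fpi_app (tapp_lin (L := bu)) //; exact: bu_lin.
move=> X a phi; rewrite !Psi_app ent_comp //; apply: cpi_congr => c.
rewrite /= Pact_app (tapp_lin (L := bu)); last exact: bu_lin.
apply: tapp_ext => a' c'; rewrite bu_lmul mkhomK //; exact: Psif_in.
Qed.

Lemma Psi_g0 a : Psi X0 (g0 a) = u a.
Proof.
rewrite Psi_app -[RHS](ctr_cu (ent_ctr HN)); apply: cpi_congr => c.
rewrite g0_app (linZ bu_lin) bu_tens (ent_one HN) //.
Qed.
End Psi.
End PSec.

Definition hom2 (U V W : lmodType K) (F : U -> V -> W) : Hm U (Hm V W) :=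
  mkhom (fun u => mkhom (F u)).
Lemma hom2_app (U V W : lmodType K) (F : U -> V -> W) : bilin F ->
  forall u v, hom2 F u v = F u v.
Proof.
move=> [H1 H2] u v; rewrite /hom2 mkhomK ?mkhomK //.
by apply: mkhom_linP.
Qed.

Lemma TFpi_app (V : lmodType K) (Y0 X Z : Ob)
  (Xi : Hm (Cm X Z) (Hm A (Hm (Cm Z Y0) V))) a h :
  cpi (ectr (Tobj (Fctr V Y0))) X Z Xi a h
  = tapp (fun h1 h2 => tapp (fun a' c' => Xi c' a' h1) (psi X Z h2 a)) (delta X Z Y0 h).
Proof.
rewrite Tpi_app Fpi_app; apply: tapp_ext => h1 h2.
by rewrite mkhomK ?tapp_app //; apply: (Tin_linP (M := Fctr V Y0)).
Qed.

Section Fwd.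
Unset Implicit Arguments.
Variables (eta : forall (M : ctr C) (X : Ob), Hm (cM M X) (Hm A (cM M X)))
          (epsT : forall (N : ent K C A) (X : Ob), Hm (Hm A (cM (ectr N) X)) (cM (ectr N) X)).
Hypothesis Heta_mor : forall M : ctr C, is_ctr M -> is_ctr_mor M (Sobj (Tobj M)) (eta M).
Hypothesis Heps_mor : forall N, is_ent N -> is_ent_mor (Tobj (Sobj N)) N (epsT N).
Hypothesis Heta_nat : forall (M M' : ctr C) (h : forall X : Ob, Hm (cM M X) (cM M' X)),
  is_ctr M -> is_ctr M' -> is_ctr_mor M M' h ->
  forall (X : Ob) (m : cM M X), Tmor M M' h X (eta M X m) = eta M' X (h X m).
Hypothesis Heps_nat : forall (N N' : ent K C A)
  (k : forall X : Ob, Hm (cM (ectr N) X) (cM (ectr N') X)),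
  is_ent N -> is_ent N' -> is_ent_mor N N' k ->
  forall (X : Ob) (g : Hm A (cM (ectr N) X)),
    epsT N' X (Tmor (ectr N) (ectr N') k X g) = k X (epsT N X g).
Hypothesis Htri1 : forall M : ctr C, is_ctr M ->
  forall (X : Ob) (g : Hm A (cM M X)),
    epsT (Tobj M) X (Tmor M (Sobj (Tobj M)) (eta M) X g) = g.
Hypothesis Htri2 : forall N, is_ent N ->
  forall (X : Ob) (m : cM (ectr N) X), epsT N X (eta (ectr N) X m) = m.

Definition epsh (X : Ob) : Hm (Cm X X) K^o := mkhom (eps X : Cm X X -> K^o).
Definition sigD (X : Ob) (f : Cm X X) (a : A) : K :=
  eta (Fctr K^o X) X (epsh X) a f.
Definition lamD (X : Ob) (f : Cm X X) : seq (A * A) :=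
  tval (epsT (Pent X) X (g0 X) f).

Lemma lamD_lin X (W : lmodType K) (b : A -> A -> W) :
  bilin b -> linearP (fun g => tapp b (lamD X g)).
Proof.
move=> Hb; apply: (comp_linP (f := tlift b)); first exact: tlift_linP.
exact: hom_linP.
Qed.

Lemma keyL (N : ent K C A) (HN : is_ent N) (X0 : Ob) (u : Hm A (cM (ectr N) X0)) :
  epsT N X0 u = cpi (ectr N) X0 X0
    (mkhom (fun c => tapp (fun x y => eact N X0 x (u y)) (lamD X0 c))).
Proof.
have Hu : Tmor (Pctr X0) (ectr N) (Psi u) X0 (g0 X0) = u.
  by apply: hom_ext => a; rewrite Tmor_app (Psi_g0 HN).
rewrite -{1}Hu (Heps_nat _ _ _ (Pent_is_ent X0) HN (Psi_mor HN u)) Psi_app; last exact: HN.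
  by apply: cpi_congr => c. 
Qed.

Section EtaL.
Variables (M : ctr C) (HM : is_ctr M) (X0 : Ob) (m : cM M X0).
Definition Phimf (Y : Ob) (phi : cM (Fctr K^o X0) Y) : cM M Y :=
  cpi M Y X0 (mkhom (fun c => phi c *: m)).
Lemma Phimf_in Y (phi : cM (Fctr K^o X0) Y) : linearP (fun c => phi c *: m).
Proof. by apply: scal_linP; apply: hom_linP. Qed.
Lemma Phimf_lin Y : linearP (@Phimf Y).
Proof.
apply: hom_comp_linP.
apply: (mkhom_linP (F := fun (phi : cM (Fctr K^o X0) Y) c => phi c *: m)) => [phi|c].
  exact: Phimf_in.
by apply: (comp_linP (f := fun k : K^o => k *: m)); [exact: smul_lin' | exact: app_linP].
Qed.
Definition Phim (Y : Ob) : Hm (cM (Fctr K^o X0) Y) (cM M Y) := mkhom (@Phimf Y).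
Lemma Phim_app Y phi : Phim Y phi = cpi M Y X0 (mkhom (fun c => phi c *: m)).
Proof. by rewrite /Phim mkhomK //; apply: Phimf_lin. Qed.
Lemma Phim_mor : is_ctr_mor (Fctr K^o X0) M Phim.
Proof.
move=> X Y phi; rewrite Phim_app.
transitivity (cpi M X Y (mkhom (fun c => cpi M Y X0 (mkhom (fun g => phi c g *: m))))); last first.
  by apply: cpi_congr => c; rewrite Phim_app.
rewrite (ctr_co HM); last first.
  split => [v|w]; first by apply: scal_linP; apply: hom_linP.
  by apply: (comp_linP (f := fun k : K^o => k *: m)); [exact: smul_lin' | exact: app2_linP].
apply: cpi_congr => h; rewrite Fpi_app (tapp_lin (L := fun k : K^o => k *: m)) //.
exact: smul_lin'.
Qed.
Lemma Phim_eps : Phim X0 (epsh X0) = m.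
Proof.
rewrite Phim_app -[RHS](ctr_cu HM); apply: cpi_congr => c.
by rewrite /epsh mkhomK //; apply: elin.
Qed.
Lemma etaL a : eta M X0 m a = cpi M X0 X0 (mkhom (fun f => sigD X0 f a *: m)).
Proof.
rewrite -{1}Phim_eps -(Heta_nat _ _ _ (Fctr_is_ctr K^o X0) HM Phim_mor) Tmor_app Phim_app.
by apply: cpi_congr.
Qed.
End EtaL.

Lemma sigD_bil X : bilin (sigD X : Cm X X -> A -> K^o).
Proof.
split => [a|f]; rewrite /sigD; first exact: hom_linP.
by apply: (lin_app (F := eta (Fctr K^o X) X (epsh X))); apply: hom_linP.
Qed.
Lemma sigD_linf X a : linearP (fun f => sigD X f a : K^o).
Proof. by case: (sigD_bil X) => H _; apply: H. Qed.
Lemma sigD_lina X f : linearP (fun a => sigD X f a : K^o).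
Proof. by case: (sigD_bil X) => _ H; apply: H. Qed.

Lemma sigD_V1 (X Y : Ob) (f : Cm X Y) (a : A) :
  tapp (fun g1 g2 => tapp (fun a' g2' => sigD Y g1 a' *: g2') (psi X Y g2 a)) (delta X Y Y f)
  = tapp (fun g1 g2 => sigD X g2 a *: g1) (delta X X Y f).
Proof.
have HM := Fctr_is_ctr (Cm X Y) Y.
have Hb : bilin (fun (c : Cm X Y) (g : Cm Y Y) => eps Y g *: c).
  by split => [g|c]; [exact: scal_lin3 | exact: eps_linP].
pose phi0 : Hm (Cm X Y) (cM (Fctr (Cm X Y) Y) Y) := hom2 (fun c g => eps Y g *: c).
have E1 : forall h1, cpi (Fctr (Cm X Y) Y) X Y phi0 h1 = h1.
  move=> h1; rewrite Fpi_app -[RHS](counitL h1); apply: tapp_ext => k1 k2.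
  by rewrite /phi0 hom2_app.
have H := congr1 (fun t : Hm A (Hm (Cm X Y) (Cm X Y)) => t a f) (Heta_mor _ HM X Y phi0).
rewrite /= in H.
transitivity (eta (Fctr (Cm X Y) Y) X (cpi (Fctr (Cm X Y) Y) X Y phi0) a f); last first.
  rewrite etaL // Fpi_app; apply: tapp_ext => h1 h2.
  rewrite mkhomK; last by apply: scal_linP; apply: sigD_linf.
  by transitivity (sigD X h2 a *: cpi (Fctr (Cm X Y) Y) X Y phi0 h1); [by [] | rewrite E1].
rewrite H TFpi_app; apply: tapp_ext => h1 h2; apply: tapp_ext => a' c'.
rewrite mkhomK; last by apply: hom_comp_linP; apply: hom_linP.
symmetry; rewrite (etaL _ HM Y (phi0 c') a') Fpi_app.
rewrite -(counitL' h1 (L := fun k => sigD Y k a' *: c')); last by apply: scal_linP; apply: sigD_linf.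
apply: tapp_ext => k1 k2.
rewrite mkhomK; last by apply: scal_linP; apply: sigD_linf.
transitivity (sigD Y k2 a' *: phi0 c' k1); first by [].
transitivity (sigD Y k2 a' *: (eps Y k1 *: c')).
  by congr (_ *: _); exact: (hom2_app Hb c' k1).
by rewrite !scalerA mulrC.
Qed.

Lemma sigD_eq1 (X : Ob) (f : Cm X X) :
  eps X f *: (1 : A)
  = tapp (fun f1 f2 => tapp (fun l1 l2 => sigD X f1 l1 *: l2) (lamD X f2)) (delta X X X f).
Proof.
have HM := Fctr_is_ctr A X.
have HT := T_is_ent HM.
have Hb : bilin (fun (a : A) (c : Cm X X) => eps X c *: a).
  by split => [c|a]; [exact: scal_lin3 | exact: eps_linP].
pose g : Hm A (cM (Fctr A X) X) := hom2 (fun (a : A) (c : Cm X X) => eps X c *: a).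
pose u := Tmor (Fctr A X) (Sobj (Tobj (Fctr A X))) (eta (Fctr A X)) X g.
have H := congr1 (fun t : Hm A (Hm (Cm X X) A) => t 1 f) (Htri1 _ HM X g).
rewrite /= in H.
transitivity (g 1 f); first by symmetry; exact: (hom2_app Hb 1 f).
rewrite -H (keyL _ HT X u) TFpi_app; apply: tapp_ext => h1 h2.
have Hbu : bilin (fun x y : A => eact (Tobj (Fctr A X)) X x (u y)).
  split => [v|w]; first exact: Tact_linb.
  by apply: comp_linP; [exact: Tact_ling | exact: hom_linP].
have L1 : linearP (fun c => tapp (fun x y : A => eact (Tobj (Fctr A X)) X x (u y)) (lamD X c)).
  exact: lamD_lin.
rewrite psi1; last first.
  split => [v|w].
    by apply: lin_app; apply: hom_linP.
  by apply: lin_app; apply: lin_app; apply: hom_linP.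
rewrite mkhomK // !tapp_app; apply: tapp_ext => x y.
rewrite Tact_app mul1r /u Tmor_app.
rewrite (etaL _ HM X (g y) x) Fpi_app.
rewrite -(counitL' h1 (L := fun k => sigD X k x *: y)); last by apply: scal_linP; apply: sigD_linf.
apply: tapp_ext => k1 k2.
rewrite mkhomK; last by apply: scal_linP; apply: sigD_linf.
transitivity (sigD X k2 x *: g y k1); first by [].
transitivity (sigD X k2 x *: (eps X k1 *: y)).
  by congr (_ *: _); exact: (hom2_app Hb y k1).
by rewrite !scalerA mulrC.
Qed.

Lemma sigD_eq2 (X : Ob) (f : Cm X X) :
  eps X f *: (1 : A)
  = tapp (fun f1 f2 => tapp (fun l1 l2 =>
        tapp (fun l1' f1' => sigD X f1' l2 *: l1') (psi X X f1 l1)) (lamD X f2))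
      (delta X X X f).
Proof.
have HM := Fctr_is_ctr A X.
have HN := T_is_ent HM.
have HNc := ent_ctr HN.
have Hb : bilin (fun (a : A) (c : Cm X X) => eps X c *: a).
  by split => [c|a]; [exact: scal_lin3 | exact: eps_linP].
pose m : Hm A (cM (Fctr A X) X) := hom2 (fun (a : A) (c : Cm X X) => eps X c *: a).
pose u := eta (ectr (Tobj (Fctr A X))) X m.
have H := congr1 (fun t : Hm A (Hm (Cm X X) A) => t 1 f) (Htri2 _ HN X m).
rewrite /= in H.
transitivity (m 1 f); first by symmetry; exact: (hom2_app Hb 1 f).
rewrite -H (keyL _ HN X u) TFpi_app; apply: tapp_ext => h1 h2.
have Hbu : bilin (fun x y : A => eact (Tobj (Fctr A X)) X x (u y)).
  split => [v|w]; first exact: Tact_linb.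
  by apply: comp_linP; [exact: Tact_ling | exact: hom_linP].
have L1 : linearP (fun c => tapp (fun x y : A => eact (Tobj (Fctr A X)) X x (u y)) (lamD X c)).
  exact: lamD_lin.
rewrite psi1; last first.
  split => [v|w].
    by apply: lin_app; apply: hom_linP.
  by apply: lin_app; apply: lin_app; apply: hom_linP.
rewrite mkhomK // !tapp_app; apply: tapp_ext => x y.
rewrite Tact_app mul1r /u.
rewrite (etaL _ HNc X m y) TFpi_app.
have Lk : linearP (fun k : Cm X X => tapp (fun a' c' => sigD X c' y *: a') (psi X X k x)).
  apply: psi_linl; split => [v|w]; first exact: scal_lin3.
  by apply: scal_linP; apply: sigD_linf.
rewrite -(counitL' h1 Lk); apply: tapp_ext => k1 k2.
rewrite -tappZ; apply: tapp_ext => a' c'.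
rewrite mkhomK; last by apply: scal_linP; apply: sigD_linf.
transitivity (sigD X c' y *: m a' k1); first by [].
transitivity (sigD X c' y *: (eps X k1 *: a')).
  by congr (_ *: _); exact: (hom2_app Hb a' k1).
by rewrite !scalerA mulrC.
Qed.

Lemma lamD_comm (Z : Ob) (g : Cm Z Z) (a : A) (W : lmodType K) (b : A -> A -> W) :
  bilin b ->
  tapp (fun l1 l2 => b l1 (l2 * a)) (lamD Z g)
  = tapp (fun a' g' => tapp (fun l1 l2 => b (a' * l1) l2) (lamD Z g')) (psi Z Z g a).
Proof.
move=> Hb; case: (Hb) => Hb1 Hb2.
have HM := Fctr_is_ctr W Z.
have HN := T_is_ent HM.
have Hi : forall y, bilin (fun (x : A) (k : Cm Z Z) => eps Z k *: b x y).
  move=> y; split => [k|x]; last exact: eps_linP.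
  by apply: comp_linP; [exact: scal_lin3 | exact: Hb1].
pose u : Hm A (Hm A (Hm (Cm Z Z) W)) :=
  mkhom (fun y => hom2 (fun (x : A) (k : Cm Z Z) => eps Z k *: b x y)).
have u_app : forall y x k, u y x k = eps Z k *: b x y.
  move=> y x k; rewrite /u mkhomK; first by rewrite hom2_app.
  apply: homL_pt => x' c y1 y2; apply: hom_ext => k'.
  rewrite hom2_app //.
  transitivity (c *: hom2 (fun (x : A) (k : Cm Z Z) => eps Z k *: b x y1) x' k'
                + hom2 (fun (x : A) (k : Cm Z Z) => eps Z k *: b x y2) x' k'); last by [].
  by rewrite !hom2_app // Hb2 scalerDr !scalerA mulrC.
pose N := Tobj (Fctr W Z).
have Hbu : forall (v : Hm A (cM (ectr N) Z)), bilin (fun x y : A => eact N Z x (v y)).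
  move=> v; split => [v'|w]; first exact: Tact_linb.
  by apply: comp_linP; [exact: Tact_ling | exact: hom_linP].
have Hpsi1 : forall (Xi : Hm (Cm Z Z) (Hm A (Hm (Cm Z Z) W))) h1,
    bilin (fun (a' : A) (c' : Cm Z Z) => Xi c' a' h1).
  move=> Xi h1; split => [v|w].
    by apply: lin_app; apply: hom_linP.
  by apply: lin_app; apply: lin_app; apply: hom_linP.
have [_ Hmor2] := Heps_mor _ HN.
have H := congr1 (fun t : Hm A (Hm (Cm Z Z) W) => t 1 g) (Hmor2 Z a u).
rewrite /= in H.
have E1 : epsT N Z (eact (Tobj (Sobj N)) Z a u) 1 g
          = tapp (fun l1 l2 => b l1 (l2 * a)) (lamD Z g).
  have L : linearP (fun c => tapp (fun l1 l2 => b l1 (l2 * a)) (lamD Z c)).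
    apply: lamD_lin; split => [v|w]; first exact: Hb1.
    by apply: (comp_linP (f := b w)); [exact: Hb2 | exact: rmul_linP (hom_linP _)] || (move=> k x y; rewrite mulrDl -scalerAl Hb2).
  rewrite (keyL _ HN Z) TFpi_app -(counitL' g L); apply: tapp_ext => h1 h2.
  rewrite psi1 //.
  rewrite mkhomK; last by apply: lamD_lin; apply: Hbu.
  rewrite !tapp_app -tappZ; apply: tapp_ext => x y.
  by rewrite Tact_app mul1r Tact_app u_app.
have E2 : eact N Z a (epsT N Z u) 1 g
          = tapp (fun a' g' => tapp (fun l1 l2 => b (a' * l1) l2) (lamD Z g')) (psi Z Z g a).
  have L : linearP (fun c => tapp (fun a' g' => tapp (fun l1 l2 => b (a' * l1) l2) (lamD Z g')) (psi Z Z c a)).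
    apply: psi_linl; split => [v|w].
      apply: tapp_linP => l1 l2; apply: (comp_linP (f := fun t => b t l2)); first exact: Hb1.
      by move=> k x y; rewrite mulrDl -scalerAl.
    apply: lamD_lin; split => [v|w']; last exact: Hb2.
    apply: (comp_linP (f := fun t => b t v)); first exact: Hb1.
    by move=> k x y; rewrite mulrDr -scalerAr.
  rewrite Tact_app mul1r (keyL _ HN Z) TFpi_app -(counitL' g L); apply: tapp_ext => h1 h2.
  rewrite -tappZ; apply: tapp_ext => a' c'.
  rewrite mkhomK; last by apply: lamD_lin; apply: Hbu.
  rewrite !tapp_app -tappZ; apply: tapp_ext => x y.
  by rewrite Tact_app u_app.
by rewrite -E1 H E2.
Qed.

Lemma hom2_linP (T U V W : lmodType K) (F : T -> U -> V -> W) :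
  (forall t, bilin (F t)) -> (forall u v, linearP (fun t => F t u v)) ->
  linearP (fun t => hom2 (F t)).
Proof.
move=> H1 H2 k x y; apply: hom_ext => u; apply: hom_ext => v.
rewrite hom2_app //.
transitivity (k *: hom2 (F x) u v + hom2 (F y) u v); last by [].
by rewrite !hom2_app // H2.
Qed.

Lemma lamD_nat (X Y : Ob) (f : Cm X Y) (W : lmodType K) (G : A -> A -> Cm X Y -> W) :
  trilin G ->
  tapp (fun g1 g2 => tapp (fun l1 l2 => G l1 l2 g2) (lamD Y g1)) (delta X Y Y f)
  = tapp (fun g1 g2 =>
         tapp (fun l1 l2 =>
                 tapp (fun l1' g1' =>
                         tapp (fun l2' g1'' => G l1' l2' g1'') (psi X Y g1' l2))
                      (psi X Y g1 l1))
              (lamD X g2))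
         (delta X X Y f).
Proof.
move=> HG; case: (HG) => HG1 HG2 HG3.
have HM := Fctr_is_ctr W Y.
have HN := T_is_ent HM.
pose N := Tobj (Fctr W Y).
pose F4 (c : Cm X Y) (a : A) := fun (x : A) (k : Cm Y Y) => eps Y k *: G x a c.
have HF4 : forall c a, bilin (F4 c a).
  move=> c a; split => [k|x]; last exact: eps_linP.
  by apply: comp_linP; [exact: scal_lin3 | exact: HG1].
have HF4c : forall a x k, linearP (fun c => F4 c a x k).
  by move=> a x k; apply: comp_linP; [exact: scal_lin3 | exact: HG3].
have HF4a : forall c x k, linearP (fun a => F4 c a x k).
  by move=> c x k; apply: comp_linP; [exact: scal_lin3 | exact: HG2].
have Hphi : bilin (fun c a => hom2 (F4 c a)).
  split => [a|c]; [exact: hom2_linP | exact: hom2_linP].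
pose phi : Hm (Cm X Y) (Hm A (Hm A (Hm (Cm Y Y) W))) := hom2 (fun c a => hom2 (F4 c a)).
have phi_app : forall c a x k, phi c a x k = eps Y k *: G x a c.
  by move=> c a x k; rewrite /phi hom2_app // hom2_app.
have Hbu : forall Z (v : Hm A (cM (ectr N) Z)), bilin (fun x y : A => eact N Z x (v y)).
  move=> Z v; split => [v'|w]; first exact: Tact_linb.
  by apply: comp_linP; [exact: Tact_ling | exact: hom_linP].
have Hpsi1 : forall Z1 Z2 (Xi : Hm (Cm Z1 Z2) (Hm A (Hm (Cm Z2 Y) W))) h1,
    bilin (fun (a' : A) (c' : Cm Z1 Z2) => Xi c' a' h1).
  move=> Z1 Z2 Xi h1; split => [v|w].
    by apply: lin_app; apply: hom_linP.
  by apply: lin_app; apply: lin_app; apply: hom_linP.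
have [Hmor1 _] := Heps_mor _ HN.
have H := congr1 (fun t : Hm A (Hm (Cm X Y) W) => t 1 f) (Hmor1 X Y phi).
rewrite /= in H.
have E1 : epsT N X (cpi (ectr (Tobj (Sobj N))) X Y phi) 1 f =
  tapp (fun g1 g2 =>
         tapp (fun l1 l2 =>
                 tapp (fun l1' g1' =>
                         tapp (fun l2' g1'' => G l1' l2' g1'') (psi X Y g1' l2))
                      (psi X Y g1 l1))
              (lamD X g2))
         (delta X X Y f).
  rewrite (keyL _ HN X) TFpi_app; apply: tapp_ext => h1 h2.
  rewrite psi1 //.
  rewrite mkhomK; last by apply: lamD_lin; apply: Hbu.
  rewrite !tapp_app; apply: tapp_ext => x y.
  rewrite Tact_app mul1r.
  rewrite (Tpi_app (M := Sobj N)) TFpi_app.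
  have L : linearP (fun k : Cm X Y => tapp (fun a' k' =>
            tapp (fun a'' k'' => G a' a'' k'') (psi X Y k' y)) (psi X Y k x)).
    apply: psi_linl; split => [v|w].
      by apply: tapp_linP => a'' k''; apply: HG1.
    by apply: psi_linl; split => [v'|w']; [apply: HG2 | apply: HG3].
  rewrite -(counitL' h1 L); apply: tapp_ext => k1 k2.
  rewrite -tappZ; apply: tapp_ext => a' k'.
  rewrite mkhomK; last by apply: (Tin_linP (M := Sobj N)).
  rewrite !tapp_app -tappZ; apply: tapp_ext => a'' k''.
  by rewrite phi_app.
have E2 : cpi (ectr N) X Y (mkhom (fun c => epsT N Y (phi c))) 1 f =
  tapp (fun g1 g2 => tapp (fun l1 l2 => G l1 l2 g2) (lamD Y g1)) (delta X Y Y f).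
  rewrite TFpi_app; apply: tapp_ext => h1 h2.
  rewrite psi1 //.
  rewrite mkhomK; last by apply: hom_comp_linP; apply: hom_linP.
  rewrite (keyL _ HN Y) TFpi_app.
  have L : linearP (fun k : Cm Y Y => tapp (fun l1 l2 => G l1 l2 h2) (lamD Y k)).
    by apply: lamD_lin; split => [v|w]; [apply: HG1 | apply: HG2].
  rewrite -(counitL' h1 L); apply: tapp_ext => k1 k2.
  rewrite psi1 //.
  rewrite mkhomK; last by apply: lamD_lin; apply: Hbu.
  rewrite !tapp_app -tappZ; apply: tapp_ext => x y.
  by rewrite Tact_app mul1r phi_app.
by rewrite -E2 -H E1.
Qed.

Lemma fwd_main :
  exists (sigma : forall X : Ob, Cm X X -> A -> K)
         (lam : forall X : Ob, Cm X X -> seq (A * A)),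
     [/\ in_V1 psi sigma, in_W1 psi lam,
         (forall (X : Ob) (f : Cm X X),
            eps X f *: (1 : A)
            = tapp (fun f1 f2 =>
                      tapp (fun l1 l2 => sigma X f1 l1 *: l2) (lam X f2))
                   (delta X X X f)) &
         (forall (X : Ob) (f : Cm X X),
            eps X f *: (1 : A)
            = tapp (fun f1 f2 =>
                      tapp (fun l1 l2 =>
                              tapp (fun l1' f1' => sigma X f1' l2 *: l1')
                                   (psi X X f1 l1))
                           (lam X f2))
                   (delta X X X f))].
Proof.
exists sigD, lamD; split.
- split; first exact: sigD_bil.
  exact: sigD_V1.
- split; [exact: lamD_lin | exact: lamD_nat | exact: lamD_comm].
- exact: sigD_eq1.
- exact: sigD_eq2.
Qed.

End Fwd.

Lemma main_iff :
  (T_left_adjoint_S psi <->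
   exists (sigma : forall X : Ob, Cm X X -> A -> K)
          (lam : forall X : Ob, Cm X X -> seq (A * A)),
     [/\ in_V1 psi sigma, in_W1 psi lam,
         (forall (X : Ob) (f : Cm X X),
            eps X f *: (1 : A)
            = tapp (fun f1 f2 =>
                      tapp (fun l1 l2 => sigma X f1 l1 *: l2) (lam X f2))
                   (delta X X X f)) &
         (forall (X : Ob) (f : Cm X X),
            eps X f *: (1 : A)
            = tapp (fun f1 f2 =>
                      tapp (fun l1 l2 =>
                              tapp (fun l1' f1' => sigma X f1' l2 *: l1')
                                   (psi X X f1 l1))
                           (lam X f2))
                   (delta X X X f))]).
Proof.
split.
  move=> [eta [epsT [[H1 H2 H3 H4] [H5 H6]]]].
  by apply: (fwd_main eta epsT); eassumption.
move=> [sigma [lam [HV HW E1 E2]]].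
exact: (back_adj HV HW E1 E2).
Qed.

End Main.

Unset Implicit Arguments.
Theorem theorem6p2 (K : fieldType) (C : coalg K) (A : algType K)
  (psi : forall X Y : Ob C, Cm X Y -> A -> seq (A * Cm X Y)) :
  is_coalg C -> is_entwining psi ->
  (T_left_adjoint_S psi <->
   exists (sigma : forall X : Ob C, Cm X X -> A -> K)
          (lam : forall X : Ob C, Cm X X -> seq (A * A)),
     [/\ in_V1 psi sigma, in_W1 psi lam,
         (forall (X : Ob C) (f : Cm X X),
            eps X f *: (1 : A)
            = tapp (fun f1 f2 =>
                      tapp (fun l1 l2 => sigma X f1 l1 *: l2) (lam X f2))
                   (delta X X X f)) &
         (forall (X : Ob C) (f : Cm X X),
            eps X f *: (1 : A)
            = tapp (fun f1 f2 =>
                      tapp (fun l1 l2 =>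
                              tapp (fun l1' f1' => sigma X f1' l2 *: l1')
                                   (psi X X f1 l1))
                           (lam X f2))
                   (delta X X X f))]).
Proof. by move=> HC HE; apply: main_iff. Qed.
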